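(* The unit interval $I=[0,1]$ and, for every integer $n \ge 1$, the sphere $S^n$ are reconstructible.
   Context: For a topological space $X$ and $x \in X$, the set $X\setminus\{x\}$ carries the subspace topology. A card of $X$ is a space homeomorphic to $X \setminus \{x\}$ for some $x \in X$. The deck of $X$ is $\mathcal{D}(X)=\{[X\setminus\{x\}]_\sim : x \in X\}$, where $[Y]_\sim$ denotes the homeomorphism class of $Y$. A space $Z$ is a reconstruction of $X$ if $\mathcal{D}(Z)=\mathcal{D}(X)$. A space $X$ is reconstructible if every reconstruction of $X$ is homeomorphic to $X$. *)

(* Defs.v *)
From Stdlib Require Import Reals Lra.
Open Scope R_scope.
Set Implicit Arguments.

Record TopSpace := {
  carrier :> Type;
  is_open : (carrier -> Prop) -> Prop;
  open_full : is_open (fun _ => True);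
  open_inter : forall U V, is_open U -> is_open V -> is_open (fun x => U x /\ V x);
  open_union : forall F : (carrier -> Prop) -> Prop,
      (forall U, F U -> is_open U) -> is_open (fun x => exists U, F U /\ U x)
}.

Definition continuous {X Y : TopSpace} (f : X -> Y) : Prop :=
  forall U, is_open Y U -> is_open X (fun x => U (f x)).

Definition homeomorphic (X Y : TopSpace) : Prop :=
  exists (f : X -> Y) (g : Y -> X),
    continuous f /\ continuous g /\
    (forall x, g (f x) = x) /\ (forall y, f (g y) = y).

Definition sub_open {X : TopSpace} (P : X -> Prop) (V : {x : X | P x} -> Prop) : Prop :=
  exists U, is_open X U /\ forall y, V y <-> U (proj1_sig y).

Lemma sub_open_full (X : TopSpace) (P : X -> Prop) : sub_open P (fun _ => True).
Proof. exists (fun _ => True); split; [apply open_full | tauto]. Qed.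

Lemma sub_open_inter (X : TopSpace) (P : X -> Prop) U V :
  sub_open P U -> sub_open P V -> sub_open P (fun x => U x /\ V x).
Proof.
  intros [U' [HU HU']] [V' [HV HV']].
  exists (fun x => U' x /\ V' x); split; [apply open_inter; auto|].
  intro y; rewrite HU', HV'; tauto.
Qed.

Lemma sub_open_union (X : TopSpace) (P : X -> Prop) (F : ({x : X | P x} -> Prop) -> Prop) :
  (forall U, F U -> sub_open P U) -> sub_open P (fun x => exists U, F U /\ U x).
Proof.
  intros HF.
  exists (fun x => exists W, (is_open X W /\
            forall y : {x : X | P x}, W (proj1_sig y) -> exists V, F V /\ V y) /\ W x).
  split.
  - apply open_union; intros W [HW _]; exact HW.
  - intro y; split.
    + intros [V [FV Vy]]. destruct (HF V FV) as [W [HW HW']].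
      exists W; split; [split; [exact HW|] | apply HW'; exact Vy].
      intros z Wz; exists V; split; [exact FV | apply HW'; exact Wz].
    + intros [W [[_ HW] Wy]]. apply HW; exact Wy.
Qed.

Definition subspace {X : TopSpace} (P : X -> Prop) : TopSpace :=
  {| carrier := {x : X | P x};
     is_open := sub_open P;
     open_full := @sub_open_full X P;
     open_inter := @sub_open_inter X P;
     open_union := @sub_open_union X P |}.

Definition card {X : TopSpace} (x : X) : TopSpace := subspace (fun y : X => y <> x).

(* D(Z) = D(X): equality of the sets of homeomorphism classes of cards. *)
Definition same_deck (Z X : TopSpace) : Prop :=
  (forall z : Z, exists x : X, homeomorphic (card z) (card x)) /\
  (forall x : X, exists z : Z, homeomorphic (card z) (card x)).

Definition reconstruction (Z X : TopSpace) : Prop := same_deck Z X.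

Definition reconstructible (X : TopSpace) : Prop :=
  forall Z : TopSpace, reconstruction Z X -> homeomorphic Z X.

Definition metric_open (T : Type) (d : T -> T -> R) (U : T -> Prop) : Prop :=
  forall x, U x -> exists eps, 0 < eps /\ forall y, d x y < eps -> U y.

Lemma metric_open_full T (d : T -> T -> R) : metric_open d (fun _ => True).
Proof. intros x _; exists 1; split; [lra | auto]. Qed.

Lemma metric_open_inter T (d : T -> T -> R) U V :
  metric_open d U -> metric_open d V -> metric_open d (fun x => U x /\ V x).
Proof.
  intros HU HV x [Ux Vx].
  destruct (HU x Ux) as [e1 [He1 H1]]; destruct (HV x Vx) as [e2 [He2 H2]].
  exists (Rmin e1 e2); split; [apply Rmin_glb_lt; auto|].
  intros y Hy; split; [apply H1 | apply H2];
    eapply Rlt_le_trans; eauto; [apply Rmin_l | apply Rmin_r].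
Qed.

Lemma metric_open_union T (d : T -> T -> R) (F : (T -> Prop) -> Prop) :
  (forall U, F U -> metric_open d U) -> metric_open d (fun x => exists U, F U /\ U x).
Proof.
  intros HF x [U [FU Ux]]. destruct (HF U FU x Ux) as [e [He H]].
  exists e; split; [exact He|]. intros y Hy; exists U; split; auto.
Qed.

Definition metric_top (T : Type) (d : T -> T -> R) : TopSpace :=
  {| carrier := T;
     is_open := metric_open d;
     open_full := metric_open_full d;
     open_inter := @metric_open_inter T d;
     open_union := @metric_open_union T d |}.

Definition R_top : TopSpace := metric_top (fun x y : R => Rabs (x - y)).

Definition unit_interval : TopSpace := subspace (fun x : R_top => 0 <= x <= 1).

Definition euclid_pt (m : nat) := {x : nat -> R | forall k, (m <= k)%nat -> x k = 0}.

Definition euclid_dist (m : nat) (x y : euclid_pt m) : R :=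
  sqrt (sum_f_R0 (fun k => (proj1_sig x k - proj1_sig y k) ^ 2) (pred m)).

Definition euclid (m : nat) : TopSpace := metric_top (@euclid_dist m).

Definition sphere (n : nat) : TopSpace :=
  subspace (fun x : euclid (S n) => sum_f_R0 (fun k => proj1_sig x k ^ 2) n = 1).

(* Main.v *)
Require Import Defs.
From Stdlib Require Import Reals Lra Lia Psatz List Classical ClassicalEpsilon
  FunctionalExtensionality PropExtensionality ProofIrrelevance.
Open Scope R_scope.

Lemma open_ext (X : TopSpace) (A B : X -> Prop) :
  is_open X A -> (forall x, A x <-> B x) -> is_open X B.
Proof.
  intros H E. assert (A = B) as <-; auto.
  apply functional_extensionality; intro; apply propositional_extensionality; auto.
Qed.

Lemma open_union2 (X : TopSpace) (A B : X -> Prop) :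
  is_open X A -> is_open X B -> is_open X (fun x => A x \/ B x).
Proof.
  intros HA HB. apply open_ext with (fun x => exists U, (U = A \/ U = B) /\ U x).
  - apply open_union. intros U [-> | ->]; auto.
  - intro x; split.
    + intros [U [[-> | ->] H]]; auto.
    + intros [H|H]; [exists A | exists B]; auto.
Qed.

Lemma open_inter' (X : TopSpace) (A B : X -> Prop) :
  is_open X A -> is_open X B -> is_open X (fun x => A x /\ B x).
Proof. apply open_inter. Qed.

Lemma open_empty (X : TopSpace) : is_open X (fun _ => False).
Proof.
  apply open_ext with (fun x => exists U, False /\ U x).
  - apply open_union. intros U [].
  - intro x; split; [intros [U [[] _]] | intros []].
Qed.

Lemma open_local (X : TopSpace) (A : X -> Prop) :
  (forall x, A x -> exists U, is_open X U /\ U x /\ forall y, U y -> A y) -> is_open X A.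
Proof.
  intros H. apply open_ext with (fun x => exists U, (is_open X U /\ forall y, U y -> A y) /\ U x).
  - apply open_union. intros U [HU _]; auto.
  - intro x; split.
    + intros [U [[_ HU] Ux]]; auto.
    + intros Ax. destruct (H x Ax) as [U [HU [Ux HUA]]]. exists U; auto.
Qed.

Definition closed (X : TopSpace) (C : X -> Prop) := is_open X (fun x => ~ C x).

Definition hausdorff (X : TopSpace) := forall x y : X, x <> y ->
  exists U V, is_open X U /\ is_open X V /\ U x /\ V y /\ forall t, U t -> V t -> False.

Definition cpt (X : TopSpace) (K : X -> Prop) :=
  forall F : (X -> Prop) -> Prop, (forall U, F U -> is_open X U) ->
    (forall x, K x -> exists U, F U /\ U x) ->
    exists l, (forall U, In U l -> F U) /\ forall x, K x -> exists U, In U l /\ U x.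

Definition conn (X : TopSpace) (S : X -> Prop) :=
  forall A B, is_open X A -> is_open X B -> (forall x, S x -> A x \/ B x) ->
    (forall x, S x -> A x -> B x -> False) ->
    (forall x, S x -> A x) \/ (forall x, S x -> B x).

Lemma list_pick {A B : Type} (R : A -> B -> Prop) (l : list A) :
  (forall a, In a l -> exists b, R a b) ->
  exists l', (forall b, In b l' -> exists a, In a l /\ R a b) /\
             (forall a, In a l -> exists b, In b l' /\ R a b).
Proof.
  induction l as [|a l IH]; intros H.
  - exists nil; split; intros ? [].
  - destruct (H a (or_introl eq_refl)) as [b Hb].
    destruct IH as [l' [H1 H2]]. { intros a' Ha'; apply H; right; auto. }
    exists (b :: l'); split.
    + intros b' [<- | Hb']; [exists a; split; [left|]; auto|].
      destruct (H1 b' Hb') as [a' [? ?]]; exists a'; split; [right|]; auto.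
    + intros a' [<- | Ha']; [exists b; split; [left|]; auto|].
      destruct (H2 a' Ha') as [b' [? ?]]; exists b'; split; [right|]; auto.
Qed.

Lemma hausdorff_T1 (X : TopSpace) : hausdorff X -> forall x : X, is_open X (fun y => y <> x).
Proof.
  intros H x. apply open_local. intros y Hy.
  destruct (H y x Hy) as [U [V [HU [HV [Uy [Vx D]]]]]].
  exists U; split; [|split]; auto. intros t Ut ->. eauto.
Qed.

Lemma cpt_closed (X : TopSpace) (K : X -> Prop) : hausdorff X -> cpt X K -> closed X K.
Proof.
  intros HX HK. unfold closed. apply open_local. intros x Kx.
  set (F := fun U : X -> Prop => is_open X U /\ exists V, is_open X V /\ V x /\
              forall t, U t -> V t -> False).
  destruct (HK F) as [l [Hl Hcov]].
  - intros U [? _]; auto.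
  - intros y Ky. assert (y <> x) by (intros ->; auto).
    destruct (HX y x H) as [U [V [HU [HV [Uy [Vx D]]]]]].
    exists U; split; auto. split; auto. exists V; auto.
  - assert (exists V, is_open X V /\ V x /\ forall U, In U l -> forall t, U t -> V t -> False)
      as [V [HV [Vx D]]].
    { clear Hcov. induction l as [|U l IH].
      - exists (fun _ => True); split; [apply open_full|split; [auto|intros ? []]].
      - destruct IH as [V [HV [Vx D]]]. { intros; apply Hl; right; auto. }
        destruct (Hl U (or_introl eq_refl)) as [_ [V' [HV' [V'x D']]]].
        exists (fun t => V t /\ V' t); split; [apply open_inter; auto|split; auto].
        intros U0 [<- | HU0] t Ut [Vt V't]; eauto. }
    exists V; split; [|split]; auto. intros y Vy Ky.
    destruct (Hcov y Ky) as [U [HU Uy]]. eauto.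
Qed.

Lemma cpt_closed_sub (X : TopSpace) (K C : X -> Prop) :
  cpt X K -> closed X C -> cpt X (fun x => K x /\ C x).
Proof.
  intros HK HC F HF Hcov.
  destruct (HK (fun U => F U \/ (forall x, U x <-> ~ C x))) as [l [Hl Hc]].
  - intros U [HU|HU]; auto. eapply open_ext; [exact HC|]. intro; rewrite HU; tauto.
  - intros x Kx. destruct (classic (C x)) as [Cx|Cx].
    + destruct (Hcov x (conj Kx Cx)) as [U [? ?]]; exists U; auto.
    + exists (fun x => ~ C x); split; auto. right; tauto.
  - destruct (classic (exists x, K x /\ C x)) as [[x0 [Kx0 Cx0]]|Hne].
    2:{ exists nil; split; [intros ? []|]. intros x Hx; exfalso; apply Hne; eauto. }
    destruct (Hcov x0 (conj Kx0 Cx0)) as [U0 [FU0 _]].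
    destruct (list_pick (fun U U' => F U' /\ forall x, C x -> U x -> U' x) l) as [l' [H1 H2]].
    + intros U HU. destruct (Hl U HU) as [FU | HU'].
      * exists U; auto.
      * exists U0; split; auto. intros x Cx Ux. apply HU' in Ux; tauto.
    + exists l'; split.
      * intros U' HU'. destruct (H1 U' HU') as [U [_ [? _]]]; auto.
      * intros x [Kx Cx]. destruct (Hc x Kx) as [U [HU Ux]].
        destruct (H2 U HU) as [U' [? [_ HUU']]]. exists U'; auto.
Qed.

Lemma cpt_image (X Y : TopSpace) (f : X -> Y) (K : X -> Prop) :
  continuous f -> cpt X K -> cpt Y (fun y => exists x, K x /\ f x = y).
Proof.
  intros Hf HK F HF Hcov.
  destruct (HK (fun U' => exists U, F U /\ forall x, U' x <-> U (f x))) as [l [Hl Hc]].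
  - intros U' [U [FU HU]]. eapply open_ext; [apply Hf, HF, FU|]. intro; rewrite HU; tauto.
  - intros x Kx. destruct (Hcov (f x) (ex_intro _ x (conj Kx eq_refl))) as [U [FU Ux]].
    exists (fun x => U (f x)); split; auto. exists U; split; auto; tauto.
  - destruct (list_pick (fun U' U => F U /\ forall x, U' x <-> U (f x)) l) as [l' [H1 H2]].
    + intros U' HU'. destruct (Hl U' HU') as [U ?]; eauto.
    + exists l'; split.
      * intros U HU. destruct (H1 U HU) as [? [_ [? _]]]; auto.
      * intros y [x [Kx <-]]. destruct (Hc x Kx) as [U' [HU' U'x]].
        destruct (H2 U' HU') as [U [? [_ HU]]]. exists U; split; auto. apply HU; auto.
Qed.

Lemma incl_cont (X : TopSpace) (P : X -> Prop) :
  @continuous (subspace P) X (@proj1_sig _ _).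
Proof. intros U HU. exists U; split; auto; tauto. Qed.

Lemma cpt_sub_amb (X : TopSpace) (P : X -> Prop) (K : subspace P -> Prop) :
  cpt (subspace P) K -> cpt X (fun x => exists H : P x, K (exist _ x H)).
Proof.
  intros HK. eapply cpt_image in HK; [|apply incl_cont].
  intros F HF Hcov. destruct (HK F HF) as [l [? Hc]].
  - intros y [x [Kx <-]]. apply Hcov. destruct x; simpl; eauto.
  - exists l; split; auto. intros x [Hx Kx]. apply Hc. exists (exist _ x Hx); auto.
Qed.

Lemma cpt_amb_sub (X : TopSpace) (P : X -> Prop) (K : subspace P -> Prop) :
  cpt X (fun x => exists H : P x, K (exist _ x H)) -> cpt (subspace P) K.
Proof.
  intros HK F HF Hcov.
  destruct (HK (fun U => is_open X U /\ exists V, F V /\ forall y : subspace P, V y <-> U (proj1_sig y)))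
    as [l [Hl Hc]].
  - intros U [? _]; auto.
  - intros x [H Kx]. destruct (Hcov _ Kx) as [V [FV Vx]].
    destruct (HF V FV) as [U [HU HUV]]. exists U; split; [split; eauto|]. apply HUV in Vx; auto.
  - destruct (list_pick (fun U V => F V /\ forall y : subspace P, V y <-> U (proj1_sig y)) l)
      as [l' [H1 H2]].
    + intros U HU. destruct (Hl U HU) as [_ [V ?]]; eauto.
    + exists l'; split.
      * intros V HV. destruct (H1 V HV) as [? [_ [? _]]]; auto.
      * intros [x H] Kx. destruct (Hc x (ex_intro _ H Kx)) as [U [HU Ux]].
        destruct (H2 U HU) as [V [? [_ HV]]]. exists V; split; auto. apply HV; auto.
Qed.

Lemma hausdorff_inj (X Y : TopSpace) (f : X -> Y) :
  continuous f -> (forall a b, f a = f b -> a = b) -> hausdorff Y -> hausdorff X.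
Proof.
  intros Hf Hi HY x y Hxy.
  destruct (HY (f x) (f y)) as [U [V [HU [HV [Ux [Vy D]]]]]].
  - intro E; apply Hxy, Hi, E.
  - exists (fun t => U (f t)), (fun t => V (f t)); repeat split; auto.
    intros t; apply D.
Qed.

Lemma hausdorff_sub (X : TopSpace) (P : X -> Prop) : hausdorff X -> hausdorff (subspace P).
Proof.
  apply hausdorff_inj with (@proj1_sig _ _); [apply incl_cont|].
  intros [a Ha] [b Hb]; simpl; intros ->; f_equal; apply proof_irrelevance.
Qed.

Lemma conn_image (X Y : TopSpace) (f : X -> Y) (S : X -> Prop) :
  (forall V, is_open Y V -> exists U, is_open X U /\ forall x, S x -> (U x <-> V (f x))) ->
  conn X S -> conn Y (fun y => exists x, S x /\ f x = y).
Proof.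
  intros Hf HS A B HA HB Hcov Hdis.
  destruct (Hf A HA) as [A' [HA' EA]]. destruct (Hf B HB) as [B' [HB' EB]].
  destruct (HS A' B' HA' HB') as [H|H].
  - intros x Sx. rewrite EA, EB; auto. apply Hcov; eauto.
  - intros x Sx. rewrite EA, EB; auto. apply Hdis; eauto.
  - left. intros y [x [Sx <-]]. apply EA; auto.
  - right. intros y [x [Sx <-]]. apply EB; auto.
Qed.

Lemma conn_image_cont (X Y : TopSpace) (f : X -> Y) (S : X -> Prop) :
  continuous f -> conn X S -> conn Y (fun y => exists x, S x /\ f x = y).
Proof. intros Hf; apply conn_image. intros V HV; exists (fun x => V (f x)); split; auto; tauto. Qed.

Lemma conn_sub_amb (X : TopSpace) (P : X -> Prop) (S : subspace P -> Prop) :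
  conn (subspace P) S -> conn X (fun x => exists H : P x, S (exist _ x H)).
Proof.
  intros HS. apply (conn_image_cont _ _ _ _ (incl_cont X P)) in HS.
  intros A B HA HB Hc Hd. destruct (HS A B HA HB) as [H|H].
  - intros y [[x Px] [Sx <-]]; apply Hc; eauto.
  - intros y [[x Px] [Sx <-]]; apply Hd; eauto.
  - left; intros x [Px Sx]; apply H; exists (exist _ x Px); auto.
  - right; intros x [Px Sx]; apply H; exists (exist _ x Px); auto.
Qed.

Lemma conn_amb_sub (X : TopSpace) (P : X -> Prop) (S : subspace P -> Prop) :
  conn X (fun x => exists H : P x, S (exist _ x H)) -> conn (subspace P) S.
Proof.
  intros HS A B [A' [HA' EA]] [B' [HB' EB]] Hc Hd.
  destruct (HS A' B' HA' HB') as [H|H].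
  - intros x [Px Sx]. destruct (Hc _ Sx); [left; apply (EA (exist _ x Px)) | right; apply (EB (exist _ x Px))]; auto.
  - intros x [Px Sx] HA1 HB1. apply (Hd _ Sx); [apply (EA (exist _ x Px)) | apply (EB (exist _ x Px))]; auto.
  - left. intros [x Px] Sx. apply EA, H; eauto.
  - right. intros [x Px] Sx. apply EB, H; eauto.
Qed.

Lemma conn_ext (X : TopSpace) (S T : X -> Prop) : conn X S -> (forall x, S x <-> T x) -> conn X T.
Proof.
  intros H E A B HA HB Hc Hd. destruct (H A B HA HB) as [H'|H'].
  - intros x Sx; apply Hc, E; auto.
  - intros x Sx; apply Hd, E; auto.
  - left; intros x Tx; apply H', E; auto.
  - right; intros x Tx; apply H', E; auto.
Qed.

Lemma conn_chain (X : TopSpace) (S : X -> Prop) :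
  (forall x y, S x -> S y -> exists T, conn X T /\ (forall t, T t -> S t) /\ T x /\ T y) ->
  conn X S.
Proof.
  intros H A B HA HB Hc Hd.
  destruct (classic (exists x, S x /\ A x)) as [[x [Sx Ax]]|Hn].
  - left. intros y Sy. destruct (H x y Sx Sy) as [T [HT [TS [Tx Ty]]]].
    destruct (HT A B HA HB) as [H'|H'].
    + intros t Tt; apply Hc; auto.
    + intros t Tt; apply Hd; auto.
    + auto.
    + exfalso. apply (Hd x); auto.
  - right. intros y Sy. destruct (Hc y Sy); auto. exfalso; eauto.
Qed.

Lemma conn_union2 (X : TopSpace) (S T : X -> Prop) :
  conn X S -> conn X T -> (exists x, S x /\ T x) -> conn X (fun x => S x \/ T x).
Proof.
  intros HS HT [x0 [Sx0 Tx0]] A B HA HB Hc Hd.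
  assert (H1 : (forall x, S x -> A x) \/ (forall x, S x -> B x)).
  { apply HS; [exact HA|exact HB| intros x Sx; apply Hc; auto | intros x Sx; apply (Hd x); auto]. }
  assert (H2 : (forall x, T x -> A x) \/ (forall x, T x -> B x)).
  { apply HT; [exact HA|exact HB| intros x Sx; apply Hc; auto | intros x Sx; apply (Hd x); auto]. }
  destruct H1 as [H1|H1]; destruct H2 as [H2|H2].
  - left; intros x [?|?]; auto.
  - exfalso; apply (Hd x0); auto.
  - exfalso; apply (Hd x0); auto.
  - right; intros x [?|?]; auto.
Qed.

Lemma cpt_ext (X : TopSpace) (S T : X -> Prop) : cpt X S -> (forall x, S x <-> T x) -> cpt X T.
Proof.
  intros H E F HF Hc. destruct (H F HF) as [l [? Hl]].
  - intros x Sx; apply Hc, E; auto.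
  - exists l; split; auto. intros x Tx; apply Hl, E; auto.
Qed.

Lemma closed_open_compl (X : TopSpace) (A : X -> Prop) : is_open X A -> closed X (fun x => ~ A x).
Proof. intros H. unfold closed. eapply open_ext; [exact H|]. intro; split; [tauto|apply NNPP]. Qed.

Definition accum (X : TopSpace) (S : X -> Prop) (c : X) :=
  forall O, is_open X O -> O c -> exists y, y <> c /\ S y /\ O y.

Lemma sub_eq (X : TopSpace) (P : X -> Prop) (u v : subspace P) : proj1_sig u = proj1_sig v -> u = v.
Proof. destruct u, v; simpl; intros ->; f_equal; apply proof_irrelevance. Qed.

Definition ZS {X1 X2 : TopSpace} {a : X1} {b : X2} (h : card a -> card b) (S : X2 -> Prop) : X1 -> Prop :=
  fun t => exists H : t <> a, S (proj1_sig (h (exist _ t H))).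

Lemma ZS_iff {X1 X2 : TopSpace} {a : X1} {b : X2} (h : card a -> card b) (S : X2 -> Prop) t (H : t <> a) :
  ZS h S t <-> S (proj1_sig (h (exist _ t H))).
Proof.
  split; [intros [H' HS] | intros HS; exists H; auto].
  replace H with H' by apply proof_irrelevance; auto.
Qed.

Lemma ZS_open {X1 X2 : TopSpace} {a : X1} {b : X2} (h : card a -> card b) (S : X2 -> Prop) :
  hausdorff X1 -> continuous h -> is_open X2 S -> is_open X1 (ZS h S).
Proof.
  intros H1 Hh HS.
  assert (HS' : is_open (card b) (fun v => S (proj1_sig v))) by (exists S; split; auto; tauto).
  destruct (Hh _ HS') as [O [HO EO]].
  eapply open_ext; [apply open_inter; [exact HO | apply (hausdorff_T1 _ H1 a)]|].
  intro t; split.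
  - intros [Ot Ht]. exists Ht. apply (EO (exist _ t Ht)); auto.
  - intros [Ht St]. split; auto. apply (EO (exist _ t Ht)); auto.
Qed.

Lemma ZS_cpt {X1 X2 : TopSpace} {a : X1} {b : X2} (h : card a -> card b) (hi : card b -> card a)
  (S : X2 -> Prop) :
  continuous hi -> (forall u, hi (h u) = u) -> (forall v, h (hi v) = v) ->
  cpt X2 S -> (forall y, S y -> y <> b) -> cpt X1 (ZS h S).
Proof.
  intros Hhi K1 K2 HS Sb.
  assert (H1 : cpt (card b) (fun v => S (proj1_sig v))).
  { apply cpt_amb_sub. eapply cpt_ext; [exact HS|]. intro y; split.
    - intros Sy; exists (Sb y Sy); auto.
    - intros [Hy Sy]; auto. }
  apply (cpt_image _ _ hi _ Hhi) in H1. apply cpt_sub_amb in H1.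
  eapply cpt_ext; [exact H1|]. intro t; split.
  - intros [Ht [v [Sv Ev]]]. exists Ht. rewrite <- Ev, K2; auto.
  - intros [Ht St]. exists Ht. exists (h (exist _ t Ht)). split; auto.
Qed.

Lemma ZS_conn {X1 X2 : TopSpace} {a : X1} {b : X2} (h : card a -> card b) (hi : card b -> card a)
  (S : X2 -> Prop) :
  continuous hi -> (forall u, hi (h u) = u) -> (forall v, h (hi v) = v) ->
  conn X2 S -> (forall y, S y -> y <> b) -> conn X1 (ZS h S).
Proof.
  intros Hhi K1 K2 HS Sb.
  assert (H1 : conn (card b) (fun v => S (proj1_sig v))).
  { apply conn_amb_sub. eapply conn_ext; [exact HS|]. intro y; split.
    - intros Sy; exists (Sb y Sy); auto.
    - intros [Hy Sy]; auto. }
  apply (conn_image_cont _ _ hi _ Hhi) in H1. apply conn_sub_amb in H1.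
  eapply conn_ext; [exact H1|]. intro t; split.
  - intros [Ht [v [Sv Ev]]]. exists Ht. rewrite <- Ev, K2; auto.
  - intros [Ht St]. exists Ht. exists (h (exist _ t Ht)). split; auto.
Qed.

Lemma sig_eta {X : TopSpace} (P : X -> Prop) (u : subspace P) : exist P (proj1_sig u) (proj2_sig u) = u.
Proof. destruct u; reflexivity. Qed.

Lemma ZS_accum {X1 X2 : TopSpace} {a : X1} {b : X2} (h : card a -> card b) (hi : card b -> card a)
  (S : X2 -> Prop) (t0 : X1) (H0 : t0 <> a) :
  hausdorff X2 -> continuous hi -> (forall u, hi (h u) = u) -> (forall v, h (hi v) = v) ->
  accum X2 S (proj1_sig (h (exist _ t0 H0))) -> (forall y, S y -> y <> b) ->
  accum X1 (ZS h S) t0.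
Proof.
  intros HX2 Hhi K1 K2 HS Sb O HO Ot0.
  destruct (HS (ZS hi O)) as [y [Hyc [Sy [Hy Oy]]]].
  - apply ZS_open; auto.
  - exists (proj2_sig (h (exist _ t0 H0))). rewrite sig_eta, K1. exact Ot0.
  - exists (proj1_sig (hi (exist _ y Hy))). split; [|split].
    + intro E. apply Hyc.
      assert (E2 : exist (fun t => t <> a) t0 H0 = hi (exist _ y Hy)) by (apply sub_eq; simpl; auto).
      rewrite E2, K2; reflexivity.
    + exists (proj2_sig (hi (exist _ y Hy))). rewrite sig_eta, K2; exact Sy.
    + exact Oy.
Qed.

Definition LocP (Y : TopSpace) (two : bool) (p : Y) (V : Y -> Prop) : Prop :=
  if two then exists P1 P2, conn Y P1 /\ conn Y P2 /\ (forall y, P1 y -> V y /\ y <> p) /\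
      (forall y, P2 y -> V y /\ y <> p) /\ (forall y, V y -> y <> p -> P1 y \/ P2 y)
  else conn Y (fun y => V y /\ y <> p).

Definition LocW (Y : TopSpace) (two : bool) (c : Y) (W : Y -> Prop) : Prop :=
  accum Y W c /\
  (if two then exists W1 W2, is_open Y W1 /\ is_open Y W2 /\ conn Y W1 /\ conn Y W2 /\
      (forall y, W1 y -> W y /\ y <> c) /\ (forall y, W2 y -> W y /\ y <> c) /\
      (forall y, W y -> y <> c -> W1 y \/ W2 y) /\ (forall y, W1 y -> W2 y -> False) /\
      accum Y W1 c /\ accum Y W2 c
   else True).

Definition Hp_prop (Y : TopSpace) (two : bool) (p : Y) : Prop :=
  forall V0, is_open Y V0 -> V0 p ->
    exists V, is_open Y V /\ V p /\ (forall y, V y -> V0 y) /\ LocP Y two p V.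

Definition Hloc_prop (Y : TopSpace) (two : bool) : Prop :=
  forall c x : Y, c <> x -> forall U, is_open Y U -> U c ->
    exists W K, is_open Y W /\ W c /\ (forall y, W y -> U y) /\ cpt Y K /\
      (forall y, W y -> K y) /\ (forall y, K y -> y <> x) /\ LocW Y two c W.

Lemma roundtrip {X1 X2 : TopSpace} {a : X1} {b : X2} (h : card a -> card b) (hi : card b -> card a)
  (K1 : forall u, hi (h u) = u) u H : hi (exist _ (proj1_sig (h u)) H) = u.
Proof.
  transitivity (hi (h u)); [f_equal; apply sub_eq; reflexivity | apply K1].
Qed.

Lemma ZS_round {X1 X2 : TopSpace} {a : X1} {b : X2} (h : card a -> card b) (hi : card b -> card a)
  (K2 : forall v, h (hi v) = v) (S : X2 -> Prop) v : ZS h S (proj1_sig (hi v)) <-> S (proj1_sig v).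
Proof. rewrite (ZS_iff h S _ (proj2_sig (hi v))), sig_eta, K2. tauto. Qed.

Lemma HA_lemma (Y Z : TopSpace) (two : bool) (p : Y) (z : Z)
  (f : card z -> card p) (fi : card p -> card z) (w : Z) (Hwz : w <> z) (x : Y)
  (h : card w -> card x) (hi : card x -> card w) :
  cpt Y (fun _ => True) -> hausdorff Y -> hausdorff Z ->
  continuous f -> continuous fi -> (forall u, fi (f u) = u) -> (forall v, f (fi v) = v) ->
  continuous h -> continuous hi -> (forall u, hi (h u) = u) -> (forall v, h (hi v) = v) ->
  Hp_prop Y two p -> Hloc_prop Y two ->
  forall U, is_open Z U -> U z ->
    exists V, is_open Y V /\ V p /\ forall y (H : y <> p), V y -> U (proj1_sig (fi (exist _ y H))).
Proof.
  intros HYc HY HZ Hf Hfi K1f K2f Hh Hhi K1 K2 Hp Hloc U HU Uz.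
  assert (Hzw : z <> w) by auto.
  set (c := proj1_sig (h (exist _ z Hzw))).
  assert (Hcx : c <> x) by exact (proj2_sig (h (exist _ z Hzw))).
  destruct (Hloc c x Hcx (ZS hi U)) as [W [K [HW [Wc [WU [HK [WK [Kx HLW]]]]]]]].
  { apply ZS_open; auto. }
  { exists Hcx. unfold c. rewrite (roundtrip h hi K1). exact Uz. }
  set (Wz := ZS h W). set (Kz := ZS h K).
  assert (HWz : is_open Z Wz) by (apply ZS_open; auto).
  assert (Wzz : Wz z) by (exists Hzw; exact Wc).
  assert (WzU : forall t, Wz t -> U t).
  { intros t [Ht Wt]. destruct (WU _ Wt) as [H' Ut]. rewrite (roundtrip h hi K1) in Ut. exact Ut. }
  assert (HKz : cpt Z Kz) by (apply (ZS_cpt h hi); auto).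
  assert (CKz : closed Z Kz) by (apply cpt_closed; auto).
  assert (WzKz : forall t, Wz t -> Kz t) by (intros t [Ht Wt]; exists Ht; auto).
  set (Dz := fun t => Kz t /\ ~ Wz t).
  assert (HDz : cpt Z Dz) by (apply cpt_closed_sub; auto; apply closed_open_compl; auto).
  assert (Dzz : forall t, Dz t -> t <> z) by (intros t [_ Wt] ->; auto).
  set (Df := ZS fi Dz).
  assert (HDf : cpt Y Df) by (apply (ZS_cpt fi f); auto).
  assert (CDf : closed Y Df) by (apply cpt_closed; auto).
  destruct (Hp (fun y => ~ Df y) CDf) as [V [HV [Vp [VV0 HLP]]]].
  { intros [H _]; auto. }
  exists V; split; [exact HV|split; [exact Vp|]].
  assert (Piece : forall Q, conn Y Q -> (forall y, Q y -> V y /\ y <> p) ->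
            (forall t, ZS f Q t -> Wz t) \/ (forall t, ZS f Q t -> ~ Kz t)).
  { intros Q HQ QV.
    assert (HQz : conn Z (ZS f Q)) by (apply (ZS_conn f fi); auto; intros y Qy; apply QV; auto).
    apply HQz; [exact HWz | exact CKz | |].
    - intros t [Ht Qt]. destruct (classic (Kz t)) as [Kt|Kt]; [|right; auto].
      destruct (classic (Wz t)) as [Wt|Wt]; [left; auto|].
      exfalso. apply (VV0 (proj1_sig (f (exist _ t Ht)))); [apply QV; auto|].
      exists (proj2_sig (f (exist _ t Ht))). rewrite sig_eta, K1f. split; auto.
    - intros t _ Wt Kt. apply Kt, WzKz, Wt. }
  assert (Acc : forall S, accum Z S z -> exists t (Ht : t <> z), S t /\ V (proj1_sig (f (exist _ t Ht)))).
  { intros S HS.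
    assert (HL : cpt Y (fun y => ~ V y)).
    { eapply cpt_ext; [apply (cpt_closed_sub _ _ _ HYc (closed_open_compl _ _ HV))|]. tauto. }
    assert (HLz : cpt Z (ZS f (fun y => ~ V y))).
    { apply (ZS_cpt f fi); auto. intros y Vy ->; auto. }
    destruct (HS _ (cpt_closed _ _ HZ HLz)) as [t [Htz [St Lt]]].
    { intros [H _]; auto. }
    exists t, Htz. split; auto. apply NNPP. intro NV. apply Lt. exists Htz; auto. }
  assert (WK' : forall y, W y -> y <> x) by (intros; apply Kx, WK; auto).
  assert (AccW : accum Z Wz z) by (apply (ZS_accum h hi W z Hzw); auto; apply HLW).
  assert (Good : forall Q, (forall t, ZS f Q t -> Wz t) ->
            forall y (H : y <> p), Q y -> U (proj1_sig (fi (exist _ y H)))).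
  { intros Q HQ y H Qy. apply WzU, HQ. apply (ZS_round f fi K2f Q (exist _ y H)). exact Qy. }
  destruct two.
  2:{ destruct (Piece _ HLP (fun y H => H)) as [G|B].
      - intros y H Vy. apply (Good _ G y H). split; auto.
      - exfalso. destruct (Acc Wz AccW) as [t [Ht [Wt Vt]]].
        apply (B t); [exists Ht; split; [exact Vt | exact (proj2_sig (f (exist _ t Ht)))] | apply WzKz; auto]. }
  destruct HLP as [P1 [P2 [C1 [C2 [P1V [P2V Pcov]]]]]].
  destruct HLW as [_ [W1 [W2 [HW1 [HW2 [CW1 [CW2 [W1W [W2W [Wcov [Wdis [A1 A2]]]]]]]]]]]].
  set (W1z := ZS h W1). set (W2z := ZS h W2).
  assert (HW1z : is_open Z W1z) by (apply ZS_open; auto).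
  assert (HW2z : is_open Z W2z) by (apply ZS_open; auto).
  assert (AW1 : accum Z W1z z).
  { apply (ZS_accum h hi W1 z Hzw); auto. intros y Wy; apply WK', W1W; auto. }
  assert (AW2 : accum Z W2z z).
  { apply (ZS_accum h hi W2 z Hzw); auto. intros y Wy; apply WK', W2W; auto. }
  assert (W1Wz : forall t, W1z t -> Wz t) by (intros t [Ht Wt]; exists Ht; apply W1W; auto).
  assert (W2Wz : forall t, W2z t -> Wz t) by (intros t [Ht Wt]; exists Ht; apply W2W; auto).
  assert (Wsplit : forall t, Wz t -> t <> z -> W1z t \/ W2z t).
  { intros t [Ht Wt] Htz. destruct (Wcov _ Wt) as [H1|H1].
    - intro E. apply Htz.
      assert (E2 : h (exist _ t Ht) = h (exist _ z Hzw)) by (apply sub_eq; exact E).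
      apply (f_equal hi) in E2. rewrite !K1 in E2. apply (f_equal (@proj1_sig _ _)) in E2. exact E2.
    - left; exists Ht; auto.
    - right; exists Ht; auto. }
  assert (Wdz : forall t, W1z t -> W2z t -> False).
  { intros t [H1 a1] [H2 a2]. replace H2 with H1 in a2 by apply proof_irrelevance. eapply Wdis; eauto. }
  assert (GoodSplit : forall Q, conn Y Q -> (forall y, Q y -> V y /\ y <> p) ->
            (forall t, ZS f Q t -> Wz t) ->
            (forall t, ZS f Q t -> W1z t) \/ (forall t, ZS f Q t -> W2z t)).
  { intros Q HQ QV G.
    assert (HQz : conn Z (ZS f Q)) by (apply (ZS_conn f fi); auto; intros y Qy; apply QV; auto).
    apply HQz; [exact HW1z | exact HW2z | |].
    - intros t Qt. apply Wsplit; auto. destruct Qt; auto.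
    - intros t _; apply Wdz. }
  assert (Hcontra : forall Qb Qg (Wa Wb : Z -> Prop), (forall t, ZS f Qb t -> ~ Kz t) ->
            (forall t, ZS f Qg t -> Wa t) -> (forall t, Wa t -> Wb t -> False) ->
            accum Z Wb z -> (forall t, Wb t -> Wz t) ->
            (forall y, V y -> y <> p -> Qb y \/ Qg y) -> False).
  { intros Qb Qg Wa Wb Bb Gg Dab AWb WbWz Cov.
    destruct (Acc Wb AWb) as [t [Ht [Wt Vt]]].
    destruct (Cov _ Vt (proj2_sig (f (exist _ t Ht)))) as [Q1|Q1].
    - apply (Bb t); [exists Ht; auto | apply WzKz, WbWz; auto].
    - apply (Dab t); [apply Gg; exists Ht; auto | auto]. }
  destruct (Piece P1 C1 P1V) as [G1|B1]; destruct (Piece P2 C2 P2V) as [G2|B2].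
  - intros y H Vy. destruct (Pcov y Vy H); [apply (Good P1 G1)| apply (Good P2 G2)]; auto.
  - exfalso. destruct (GoodSplit P1 C1 P1V G1) as [S1|S1].
    + apply (Hcontra P2 P1 W1z W2z); auto. intros y Vy Hy; destruct (Pcov y Vy Hy); auto.
    + apply (Hcontra P2 P1 W2z W1z); auto.
      * intros t a b; eapply Wdz; eauto.
      * intros y Vy Hy; destruct (Pcov y Vy Hy); auto.
  - exfalso. destruct (GoodSplit P2 C2 P2V G2) as [S1|S1].
    + apply (Hcontra P1 P2 W1z W2z); auto.
    + apply (Hcontra P1 P2 W2z W1z); auto.
      intros t a b; eapply Wdz; eauto.
  - exfalso. destruct (Acc W1z AW1) as [t [Ht [Wt Vt]]].
    destruct (Pcov _ Vt (proj2_sig (f (exist _ t Ht)))) as [Q1|Q1].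
    + apply (B1 t); [exists Ht; auto | apply WzKz, W1Wz; auto].
    + apply (B2 t); [exists Ht; auto | apply WzKz, W1Wz; auto].
Qed.

Definition extf {Z Y : TopSpace} {z : Z} {p : Y} (f : card z -> card p) (t : Z) : Y :=
  match excluded_middle_informative (t = z) with
  | left _ => p
  | right H => proj1_sig (f (exist _ t H))
  end.

Lemma extf_z {Z Y : TopSpace} {z : Z} {p : Y} (f : card z -> card p) : extf f z = p.
Proof. unfold extf. destruct (excluded_middle_informative (z = z)); [auto|congruence]. Qed.

Lemma extf_ne {Z Y : TopSpace} {z : Z} {p : Y} (f : card z -> card p) t (H : t <> z) :
  extf f t = proj1_sig (f (exist _ t H)).
Proof.
  unfold extf. destruct (excluded_middle_informative (t = z)); [congruence|].
  do 3 f_equal. apply proof_irrelevance.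
Qed.

Lemma extf_inv {Z Y : TopSpace} {z : Z} {p : Y} (f : card z -> card p) (fi : card p -> card z)
  (K1 : forall u, fi (f u) = u) t : extf fi (extf f t) = t.
Proof.
  destruct (classic (t = z)) as [->|H].
  - rewrite extf_z, extf_z; auto.
  - rewrite (extf_ne f t H). rewrite (extf_ne fi _ (proj2_sig (f (exist _ t H)))).
    rewrite sig_eta, K1; reflexivity.
Qed.

Lemma ext_homeo (Y Z : TopSpace) (p : Y) (z : Z) (f : card z -> card p) (fi : card p -> card z) :
  cpt Y (fun _ => True) -> hausdorff Y -> hausdorff Z ->
  continuous f -> continuous fi -> (forall u, fi (f u) = u) -> (forall v, f (fi v) = v) ->
  (forall U, is_open Z U -> U z ->
    exists V, is_open Y V /\ V p /\ forall y (H : y <> p), V y -> U (proj1_sig (fi (exist _ y H)))) ->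
  homeomorphic Z Y.
Proof.
  intros HYc HY HZ Hf Hfi K1 K2 HA.
  assert (GF := extf_inv f fi K1). assert (FG := extf_inv fi f K2).
  assert (CG : continuous (extf fi)).
  { intros U HU.
    assert (HU' : is_open (card z) (fun u => U (proj1_sig u))) by (exists U; split; auto; tauto).
    destruct (Hfi _ HU') as [O [HO EO]].
    assert (E1 : forall y (H : y <> p), U (extf fi y) <-> O y).
    { intros y H. rewrite (extf_ne fi y H). apply (EO (exist _ y H)). }
    destruct (classic (U z)) as [Uz|Uz].
    - destruct (HA U HU Uz) as [V [HV [Vp HVU]]].
      eapply open_ext; [apply open_union2; [apply open_inter; [exact HO | apply (hausdorff_T1 _ HY p)] | exact HV]|].
      intro y. destruct (classic (y = p)) as [->|H].
      + rewrite extf_z. tauto.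
      + rewrite E1 with (H := H). split; [intros [[? ?]|Vy]; auto | intros; left; auto].
        rewrite <- (E1 y H), (extf_ne fi y H). apply HVU; auto.
    - eapply open_ext; [apply open_inter; [exact HO | apply (hausdorff_T1 _ HY p)]|].
      intro y. destruct (classic (y = p)) as [->|H].
      + rewrite extf_z. tauto.
      + rewrite E1 with (H := H). tauto. }
  assert (CF : continuous (extf f)).
  { intros V HV.
    assert (Hc : cpt Z (fun t => exists y, ~ V y /\ extf fi y = t)).
    { apply cpt_image; auto. eapply cpt_ext; [apply (cpt_closed_sub _ _ _ HYc (closed_open_compl _ _ HV))|]. tauto. }
    eapply open_ext; [apply (cpt_closed _ _ HZ Hc)|].
    intro t; split.
    - intros Hn. apply NNPP. intro NV. apply Hn. exists (extf f t); split; auto.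
    - intros Vt [y [Vy <-]]. rewrite FG in Vt. auto. }
  exists (extf f), (extf fi). auto.
Qed.

Lemma three_points (Z Y : TopSpace) :
  (forall z : Z, exists x : Y, homeomorphic (card z) (card x)) ->
  (exists y1 y2 y3 : Y, y1 <> y2 /\ y1 <> y3 /\ y2 <> y3) ->
  forall a b : Z, exists w, w <> a /\ w <> b.
Proof.
  intros D [y1 [y2 [y3 [N12 [N13 N23]]]]] a b.
  destruct (D a) as [x [g [gi [_ [_ [K1 K2]]]]]].
  assert (Two : exists u1 u2 : card x, u1 <> u2).
  { destruct (classic (y1 = x)) as [->|H1].
    - exists (exist _ y2 (fun E => N12 (eq_sym E))), (exist _ y3 (fun E => N13 (eq_sym E))).
      intro E; apply N23; apply (f_equal (@proj1_sig _ _)) in E; exact E.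
    - destruct (classic (y2 = x)) as [->|H2].
      + exists (exist _ y1 H1), (exist _ y3 (fun E => N23 (eq_sym E))).
        intro E; apply N13; apply (f_equal (@proj1_sig _ _)) in E; exact E.
      + exists (exist _ y1 H1), (exist _ y2 H2).
        intro E; apply N12; apply (f_equal (@proj1_sig _ _)) in E; exact E. }
  destruct Two as [u1 [u2 N]].
  destruct (classic (proj1_sig (gi u1) = b)) as [E1|E1].
  - exists (proj1_sig (gi u2)). split; [exact (proj2_sig (gi u2))|].
    intro E2. apply N. rewrite <- (K2 u1), <- (K2 u2). f_equal. apply sub_eq. congruence.
  - exists (proj1_sig (gi u1)). split; [exact (proj2_sig (gi u1))|auto].
Qed.

Lemma Z_haus (Z Y : TopSpace) :
  hausdorff Y ->
  (forall z : Z, exists x : Y, homeomorphic (card z) (card x)) ->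
  (exists y1 y2 y3 : Y, y1 <> y2 /\ y1 <> y3 /\ y2 <> y3) -> hausdorff Z.
Proof.
  intros HY D T.
  assert (Hc : forall w : Z, hausdorff (card w)).
  { intros w. destruct (D w) as [x [g [gi [Hg [_ [K1 _]]]]]].
    apply (hausdorff_inj _ _ g Hg); [|apply hausdorff_sub; auto].
    intros a b E; rewrite <- (K1 a), <- (K1 b), E; auto. }
  assert (T1 : forall w : Z, is_open Z (fun t => t <> w)).
  { intros w. apply open_local. intros t Htw.
    destruct (three_points Z Y D T t w) as [w' [Hw't Hw'w]].
    destruct (Hc w' (exist _ t (fun E => Hw't (eq_sym E))) (exist _ w (fun E => Hw'w (eq_sym E))))
      as [U [V [[U0 [HU0 EU]] [HV [Ut [Vw Dis]]]]]].
    { intro E; apply Htw; apply (f_equal (@proj1_sig _ _)) in E; exact E. }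
    exists U0; split; [exact HU0|split].
    - apply (EU (exist _ t (fun E => Hw't (eq_sym E)))); auto.
    - intros y U0y ->. apply (Dis (exist _ w (fun E => Hw'w (eq_sym E)))); auto.
      apply (EU (exist _ w (fun E => Hw'w (eq_sym E)))); auto. }
  intros a b Hab.
  destruct (three_points Z Y D T a b) as [w [Hwa Hwb]].
  destruct (Hc w (exist _ a (fun E => Hwa (eq_sym E))) (exist _ b (fun E => Hwb (eq_sym E))))
    as [U [V [[U0 [HU0 EU]] [[V0 [HV0 EV]] [Ua [Vb Dis]]]]]].
  { intro E; apply Hab; apply (f_equal (@proj1_sig _ _)) in E; exact E. }
  exists (fun t => U0 t /\ t <> w), (fun t => V0 t /\ t <> w).
  split; [apply open_inter; auto|split; [apply open_inter; auto|]].
  split; [split; [apply (EU (exist _ a (fun E => Hwa (eq_sym E)))); auto | auto]|].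
  split; [split; [apply (EV (exist _ b (fun E => Hwb (eq_sym E)))); auto | auto]|].
  intros t [U0t Htw] [V0t _].
  apply (Dis (exist _ t Htw)); [apply (EU (exist _ t Htw)) | apply (EV (exist _ t Htw))]; auto.
Qed.

Theorem abstract_recon (Y : TopSpace) (two : bool) (p : Y) :
  cpt Y (fun _ => True) -> hausdorff Y ->
  (exists y1 y2 y3 : Y, y1 <> y2 /\ y1 <> y3 /\ y2 <> y3) ->
  Hp_prop Y two p -> Hloc_prop Y two -> reconstructible Y.
Proof.
  intros HYc HY T Hp Hloc Z [D1 D2].
  assert (HZ : hausdorff Z) by (apply (Z_haus Z Y); auto).
  destruct (D2 p) as [z [f [fi [Hf [Hfi [K1f K2f]]]]]].
  destruct (three_points Z Y D1 T z z) as [w [Hwz _]].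
  destruct (D1 w) as [x [h [hi [Hh [Hhi [K1 K2]]]]]].
  apply (ext_homeo Y Z p z f fi); auto.
  apply (HA_lemma Y Z two p z f fi w Hwz x h hi); auto.
Qed.

Lemma interval_cpt a b : a <= b -> cpt R_top (fun x => a <= x <= b).
Proof.
  intros Hab F HF Hcov.
  set (E := fun t => a <= t <= b /\ exists l, (forall U, In U l -> F U) /\
              forall x, a <= x <= t -> exists U, In U l /\ U x).
  assert (Ea : E a).
  { split; [lra|]. destruct (Hcov a) as [U [FU Ua]]; [lra|]. exists (U :: nil); split.
    - intros U' [<-|[]]; auto.
    - intros x Hx; exists U; split; [left; auto| replace x with a by lra; auto]. }
  destruct (completeness E) as [m [Hub Hlub]].
  { exists b; intros t [Ht _]; lra. }
  { exists a; auto. }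
  assert (am : a <= m) by (apply Hub; auto).
  assert (mb : m <= b) by (apply Hlub; intros t [Ht _]; lra).
  destruct (Hcov m) as [U [FU Um]]; [lra|].
  destruct (HF U FU m Um) as [eps [Heps HU]].
  assert (Ht : exists t, E t /\ m - eps < t).
  { apply NNPP; intro Hn. assert (m <= m - eps); [|lra]. apply Hlub. intros t Et.
    apply Rnot_lt_le. intro; apply Hn; eauto. }
  destruct Ht as [t [Et Hmt]].
  assert (tm : t <= m) by (apply Hub; auto).
  destruct Et as [Ht [l [Hl Hlc]]].
  set (s := Rmin b (m + eps/2)).
  assert (sb : s <= b) by apply Rmin_l.
  assert (sm : s <= m + eps/2) by apply Rmin_r.
  assert (Es : E s).
  { split; [split; [unfold s; apply Rmin_glb; lra | auto]|]. exists (U :: l); split.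
    - intros U' [<-|?]; auto.
    - intros x Hx. destruct (Rle_dec x t).
      + destruct (Hlc x) as [U' [? ?]]; [lra|]. exists U'; split; [right|]; auto.
      + exists U; split; [left; auto|]. apply HU. split_Rabs; lra. }
  assert (s <= m) by (apply Hub; auto).
  assert (Hsb : s = b).
  { unfold s, Rmin in *. destruct (Rle_dec b (m + eps/2)); lra. }
  rewrite Hsb in Es. destruct Es as [_ [l' [? ?]]]. exists l'; split; auto.
Qed.

Lemma conv_sep (S A B : R -> Prop) a b : a < b ->
  (forall t, a <= t <= b -> S t) ->
  is_open R_top A -> is_open R_top B ->
  (forall x, S x -> A x \/ B x) -> (forall x, S x -> A x -> B x -> False) ->
  A a -> B b -> False.
Proof.
  intros Hab HS HA HB Hc Hd Aa Bb.
  set (E := fun t => a <= t <= b /\ forall s, a <= s <= t -> A s).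
  assert (Ea : E a) by (split; [lra|]; intros s Hs; replace s with a by lra; auto).
  destruct (completeness E) as [m [Hub Hlub]].
  { exists b; intros t [Ht _]; lra. }
  { exists a; auto. }
  assert (am : a <= m) by (apply Hub; auto).
  assert (mb : m <= b) by (apply Hlub; intros t [Ht _]; lra).
  assert (Approx : forall s, s < m -> exists t, E t /\ s < t).
  { intros s Hs. apply NNPP; intro Hn. assert (m <= s); [|lra]. apply Hlub. intros t Et.
    apply Rnot_lt_le. intro; apply Hn; eauto. }
  assert (Below : forall s, a <= s < m -> A s).
  { intros s Hs. destruct (Approx s) as [t [[_ Ht] st]]; [lra|]. apply Ht; lra. }
  destruct (Hc m (HS m (conj am mb))) as [Am|Bm].
  - destruct (HA m Am) as [eps [Heps HU]].
    destruct (Req_dec m b) as [->|Hmb].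
    + apply (Hd b); auto.
    + set (s := Rmin b (m + eps/2)).
      assert (sb : s <= b) by apply Rmin_l.
      assert (sm : s <= m + eps/2) by apply Rmin_r.
      assert (ms : m < s) by (unfold s; apply Rmin_glb_lt; lra).
      assert (Es : E s).
      { split; [lra|]. intros x Hx. destruct (Rlt_le_dec x m).
        - apply Below; lra.
        - apply HU. split_Rabs; lra. }
      assert (s <= m) by (apply Hub; auto). lra.
  - destruct (HB m Bm) as [eps [Heps HU]].
    destruct (Req_dec m a) as [->|Hma].
    + apply (Hd a); auto.
    + destruct (Approx (m - eps)) as [t [[Ht HAt] mt]]; [lra|].
      assert (t <= m) by (apply Hub; split; auto).
      apply (Hd t); [apply HS; lra | apply HAt; lra | apply HU; split_Rabs; lra].
Qed.

Lemma conv_conn (S : R -> Prop) :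
  (forall x y t, S x -> S y -> x <= t <= y -> S t) -> conn R_top S.
Proof.
  intros Hconv A B HA HB Hc Hd.
  destruct (classic (forall x, S x -> A x)) as [H|H]; [left; auto|].
  destruct (classic (forall x, S x -> B x)) as [H'|H']; [right; auto|].
  exfalso.
  apply not_all_ex_not in H as [b0 H]. apply imply_to_and in H as [Sb0 Ab0].
  apply not_all_ex_not in H' as [a0 H']. apply imply_to_and in H' as [Sa0 Ba0].
  assert (A a0) by (destruct (Hc a0 Sa0); tauto).
  assert (B b0) by (destruct (Hc b0 Sb0); tauto).
  destruct (Rtotal_order a0 b0) as [Hlt|[Heq|Hgt]].
  - apply (conv_sep S A B a0 b0); auto. intros t Ht; apply (Hconv a0 b0); auto.
  - subst; tauto.
  - apply (conv_sep S B A b0 a0); auto.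
    + intros t Ht; apply (Hconv b0 a0); auto.
    + intros x Sx; destruct (Hc x Sx); auto.
    + intros x Sx Bx Ax; eapply Hd; eauto.
Qed.

Lemma ball_open_R c r : is_open R_top (fun u => Rabs (u - c) < r).
Proof.
  intros u Hu. exists (r - Rabs (u - c)); split; [lra|]. intros y Hy. split_Rabs; lra.
Qed.

Lemma out_open_R c r : is_open R_top (fun u => r < Rabs (u - c)).
Proof.
  intros u Hu. exists (Rabs (u - c) - r); split; [lra|]. intros y Hy. split_Rabs; lra.
Qed.

Lemma hausdorff_R : hausdorff R_top.
Proof.
  intros x y Hxy. set (d := Rabs (x - y)).
  assert (Hd : 0 < d) by (unfold d; split_Rabs; lra).
  exists (fun u => Rabs (u - x) < d/2), (fun u => Rabs (u - y) < d/2).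
  split; [apply ball_open_R|split; [apply ball_open_R|]].
  split; [split_Rabs; lra|split; [split_Rabs; lra|]].
  intros t H1 H2. unfold d in *. split_Rabs; lra.
Qed.

Definition iv (y : unit_interval) : R := proj1_sig y.

Lemma I_trace (U : R -> Prop) : is_open R_top U -> is_open unit_interval (fun y => U (iv y)).
Proof. intros H. exists U; split; auto; tauto. Qed.

Lemma I_cpt : cpt unit_interval (fun _ => True).
Proof.
  apply cpt_amb_sub. eapply cpt_ext; [apply (interval_cpt 0 1); lra|].
  intro x; split; [intros H; exists H; auto|intros [H _]; auto].
Qed.

Lemma I_haus : hausdorff unit_interval.
Proof. apply hausdorff_sub, hausdorff_R. Qed.

Lemma I_eq (u v : unit_interval) : iv u = iv v -> u = v.
Proof. intros; apply sub_eq; auto. Qed.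

Lemma I_three : exists y1 y2 y3 : unit_interval, y1 <> y2 /\ y1 <> y3 /\ y2 <> y3.
Proof.
  assert (H0 : 0 <= 0 <= 1) by lra. assert (H1 : 0 <= 1/2 <= 1) by lra. assert (H2 : 0 <= 1 <= 1) by lra.
  exists (exist _ 0 H0), (exist _ (1/2) H1), (exist _ 1 H2).
  repeat split; intro E; apply (f_equal iv) in E; unfold iv in E; simpl in E; lra.
Qed.

Definition I0 : unit_interval := exist (fun x : R_top => 0 <= x <= 1) 0 (conj (Rle_refl 0) Rle_0_1).

Lemma I_Hp : Hp_prop unit_interval false I0.
Proof.
  intros V0 [U0 [HU0 EU0]] V0p.
  assert (U00 : U0 0) by (apply (EU0 I0); auto).
  destruct (HU0 0 U00) as [r [Hr Hball]].
  exists (fun y => Rabs (iv y - 0) < r). split; [apply (I_trace (fun u => Rabs (u - 0) < r)), ball_open_R|].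
  split; [unfold iv, I0; simpl; split_Rabs; lra|]. split.
  - intros y Hy. apply EU0, Hball. unfold iv in Hy. split_Rabs; lra.
  - simpl. apply conn_amb_sub. apply conn_ext with (fun x => 0 < x <= 1 /\ Rabs (x - 0) < r).
    + apply conv_conn. intros x y t Hx Hy Ht. split; [lra|]. split_Rabs; lra.
    + intro x; split.
      * intros [Hx Hr']. assert (Hx' : 0 <= x <= 1) by lra. exists Hx'. split; [exact Hr'|].
        intro E. apply (f_equal iv) in E. unfold iv, I0 in E; simpl in E; lra.
      * intros [Hx [Hr' Hne]]. split; auto. destruct (Req_dec x 0) as [->|]; [|lra].
        exfalso; apply Hne; apply I_eq; reflexivity.
Qed.

Lemma I_Hloc : Hloc_prop unit_interval false.
Proof.
  intros c x Hcx U [U0 [HU0 EU0]] Uc.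
  assert (U0c : U0 (iv c)) by (apply EU0; auto).
  destruct (HU0 _ U0c) as [r [Hr Hball]].
  set (d := Rabs (iv c - iv x)).
  assert (Hd : 0 < d).
  { unfold d. destruct (Req_dec (iv c) (iv x)) as [E|E]; [exfalso; apply Hcx, I_eq, E|]. split_Rabs; lra. }
  assert (Hd1 : d <= 1) by (unfold d, iv; destruct c as [c Hc], x as [x Hx]; simpl; split_Rabs; lra).
  set (del := Rmin r d / 2).
  assert (Hdel : 0 < del) by (unfold del; generalize (Rmin_glb_lt r d 0 Hr Hd); lra).
  assert (Hdr : del < r) by (unfold del; generalize (Rmin_l r d); lra).
  assert (Hdd : del < d) by (unfold del; generalize (Rmin_r r d); lra).
  exists (fun y => Rabs (iv y - iv c) < del), (fun y => Rabs (iv y - iv c) <= del).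
  split; [apply (I_trace (fun u => Rabs (u - iv c) < del)), ball_open_R|].
  split; [split_Rabs; lra|].
  split; [intros y Hy; apply EU0, Hball; unfold iv in *; split_Rabs; lra|].
  split.
  { eapply cpt_ext; [apply (cpt_closed_sub _ _ (fun y => Rabs (iv y - iv c) <= del) I_cpt)|].
    - unfold closed. eapply open_ext; [apply (I_trace (fun u => del < Rabs (u - iv c))), (out_open_R (iv c) del)|]. intro y; lra.
    - intro y; tauto. }
  split; [intros y Hy; lra|].
  split; [intros y Hy ->; unfold d in Hdd; split_Rabs; lra|].
  split; auto.
  intros O [O0 [HO0 EO0]] Oc.
  assert (O0c : O0 (iv c)) by (apply EO0; auto).
  destruct (HO0 _ O0c) as [s [Hs Hballs]].
  set (tau := Rmin del s / 2).
  assert (Htau : 0 < tau) by (unfold tau; generalize (Rmin_glb_lt del s 0 Hdel Hs); lra).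
  assert (Htd : tau < del) by (unfold tau; generalize (Rmin_l del s); lra).
  assert (Hts : tau < s) by (unfold tau; generalize (Rmin_r del s); lra).
  assert (Hdd2 : del <= d/2) by (unfold del; generalize (Rmin_r r d); lra).
  destruct c as [cv Hc]. unfold iv in *; simpl in *.
  destruct (Rle_dec cv (1/2)).
  - assert (Hy : 0 <= cv + tau <= 1) by lra.
    exists (exist _ (cv + tau) Hy). simpl. split; [|split].
    + intro E; apply (f_equal iv) in E; unfold iv in E; simpl in E; lra.
    + split_Rabs; lra.
    + apply EO0; simpl. apply Hballs. split_Rabs; lra.
  - assert (Hy : 0 <= cv - tau <= 1) by lra.
    exists (exist _ (cv - tau) Hy). simpl. split; [|split].
    + intro E; apply (f_equal iv) in E; unfold iv in E; simpl in E; lra.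
    + split_Rabs; lra.
    + apply EO0; simpl. apply Hballs. split_Rabs; lra.
Qed.

Theorem I_recon : reconstructible unit_interval.
Proof.
  apply (abstract_recon unit_interval false I0 I_cpt I_haus I_three I_Hp I_Hloc).
Qed.

Definition dot (n : nat) (x y : nat -> R) : R := sum_f_R0 (fun k => x k * y k) n.
Definition pt {n : nat} (y : sphere n) : nat -> R := proj1_sig (proj1_sig y).

Lemma sum_term_le (f : nat -> R) n k : (forall j, 0 <= f j) -> (k <= n)%nat -> f k <= sum_f_R0 f n.
Proof.
  intros Hf Hk. induction n as [|n IH].
  - replace k with 0%nat by lia. simpl; lra.
  - simpl. destruct (Nat.eq_dec k (S n)) as [->|Hne].
    + generalize (cond_pos_sum f n Hf); lra.
    + generalize (IH ltac:(lia)) (Hf (S n)); lra.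
Qed.

Lemma sum_zero_each (f : nat -> R) n k : (forall j, 0 <= f j) -> sum_f_R0 f n = 0 -> (k <= n)%nat -> f k = 0.
Proof. intros Hf Hs Hk. generalize (sum_term_le f n k Hf Hk) (Hf k); lra. Qed.

Lemma dot_sym n x y : dot n x y = dot n y x.
Proof. unfold dot; apply sum_eq; intros; ring. Qed.

Lemma dot_lin n a b x y z : dot n z (fun k => a * x k + b * y k) = a * dot n z x + b * dot n z y.
Proof.
  unfold dot. rewrite <- (sum_eq (fun k => a * (z k * x k) + b * (z k * y k))) by (intros; ring).
  rewrite sum_plus, !scal_sum. f_equal; apply sum_eq; intros; ring.
Qed.

Lemma dot_linl n a b x y z : dot n (fun k => a * x k + b * y k) z = a * dot n x z + b * dot n y z.
Proof. rewrite dot_sym, dot_lin, (dot_sym n z x), (dot_sym n z y); auto. Qed.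

Lemma dot_scal n a x z : dot n z (fun k => a * x k) = a * dot n z x.
Proof. unfold dot. rewrite scal_sum. apply sum_eq; intros; ring. Qed.

Lemma dot_nonneg n x : 0 <= dot n x x.
Proof.
  unfold dot. induction n as [|n IH]; simpl; [nra|]. generalize (Rle_0_sqr (x (S n))); unfold Rsqr; lra.
Qed.

Lemma dot_sub_sq n x y :
  sum_f_R0 (fun k => (x k - y k) ^ 2) n = dot n x x + dot n y y - 2 * dot n x y.
Proof.
  unfold dot. rewrite <- (sum_eq (fun k => (x k * x k + y k * y k) - 2 * (x k * y k))) by (intros; ring).
  rewrite minus_sum, sum_plus.
  assert (E : sum_f_R0 (fun k => 2 * (x k * y k)) n = 2 * sum_f_R0 (fun k => x k * y k) n)
    by (rewrite scal_sum; apply sum_eq; intros; ring).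
  rewrite E; ring.
Qed.

Lemma pt_unit n (y : sphere n) : dot n (pt y) (pt y) = 1.
Proof.
  destruct y as [[v Hv] Hs]. unfold pt, dot; simpl. simpl in Hs. rewrite <- Hs.
  apply sum_eq; intros; ring.
Qed.

Lemma pt_zero n (y : sphere n) k : (S n <= k)%nat -> pt y k = 0.
Proof. destruct y as [[v Hv] Hs]; unfold pt; simpl; auto. Qed.

Lemma sph_ext n (a b : sphere n) : (forall k, pt a k = pt b k) -> a = b.
Proof.
  destruct a as [[va Ha] Sa], b as [[vb Hb] Sb]; unfold pt; simpl. intros E.
  assert (va = vb) by (apply functional_extensionality; auto). subst vb.
  assert (Ha = Hb) by apply proof_irrelevance. subst Hb.
  f_equal; apply proof_irrelevance.
Qed.

Lemma dist_sq n (a b : sphere n) :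
  sum_f_R0 (fun k => (pt a k - pt b k) ^ 2) n = 2 - 2 * dot n (pt a) (pt b).
Proof. rewrite dot_sub_sq, !pt_unit; ring. Qed.

Lemma dot_le1 n (a b : sphere n) : dot n (pt a) (pt b) <= 1.
Proof.
  assert (0 <= sum_f_R0 (fun k => (pt a k - pt b k) ^ 2) n) by (apply cond_pos_sum; intros j; apply pow2_ge_0).
  rewrite dist_sq in H; lra.
Qed.

Lemma sph_eq_dot n (a b : sphere n) : dot n (pt a) (pt b) = 1 -> a = b.
Proof.
  intros H. apply sph_ext. intros k. destruct (Nat.le_gt_cases k n) as [Hk|Hk].
  - assert (E : sum_f_R0 (fun k => (pt a k - pt b k) ^ 2) n = 0) by (rewrite dist_sq; lra).
    generalize (sum_zero_each (fun k => (pt a k - pt b k) ^ 2) n k ltac:(intros j; apply pow2_ge_0) E Hk). simpl. intros; nra.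
  - rewrite !pt_zero; auto.
Qed.

Lemma dot_lt1 n (a b : sphere n) : a <> b -> dot n (pt a) (pt b) < 1.
Proof. intros H. destruct (dot_le1 n a b); auto. exfalso; apply H, sph_eq_dot; auto. Qed.

Definition mk_sph (n : nat) (v : nat -> R) (Hz : forall k, (S n <= k)%nat -> v k = 0)
  (Hu : dot n v v = 1) : sphere n.
Proof.
  refine (exist _ (exist _ v Hz) _). simpl. transitivity (dot n v v); [|exact Hu]. unfold dot. apply sum_eq; intros; simpl; ring.
Defined.

Lemma mk_sph_pt n v Hz Hu : pt (mk_sph n v Hz Hu) = v.
Proof. reflexivity. Qed.

Lemma coord_le_dist n (x y : nat -> R) k : (k <= n)%nat ->
  Rabs (x k - y k) <= sqrt (sum_f_R0 (fun j => (x j - y j) ^ 2) n).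
Proof.
  intros Hk. rewrite <- (sqrt_pow2 (Rabs (x k - y k))) by apply Rabs_pos. apply sqrt_le_1_alt.
  replace (Rabs (x k - y k) ^ 2) with ((x k - y k) ^ 2) by (rewrite <- !Rsqr_pow2, <- Rsqr_abs; auto).
  apply (sum_term_le (fun j => (x j - y j) ^ 2)); auto. intros j; apply pow2_ge_0.
Qed.

Lemma dot_lip n (c x y : nat -> R) :
  Rabs (dot n c x - dot n c y) <= sum_f_R0 (fun k => Rabs (c k)) n * sqrt (sum_f_R0 (fun j => (x j - y j) ^ 2) n).
Proof.
  unfold dot. rewrite <- minus_sum.
  eapply Rle_trans; [apply sum_f_R0_triangle|]. rewrite Rmult_comm, scal_sum.
  apply sum_Rle. intros k Hk.
  replace (c k * x k - c k * y k) with (c k * (x k - y k)) by ring. rewrite Rabs_mult.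
  apply Rmult_le_compat_l; [apply Rabs_pos|]. apply coord_le_dist; auto.
Qed.

Lemma dot_open_gt n (c : nat -> R) (al : R) : is_open (sphere n) (fun y => al < dot n c (pt y)).
Proof.
  exists (fun x : euclid (S n) => al < dot n c (proj1_sig x)). split; [|intros; unfold pt; tauto].
  intros x Hx. set (M := sum_f_R0 (fun k => Rabs (c k)) n + 1).
  assert (HM : 0 < M) by (unfold M; generalize (cond_pos_sum (fun k => Rabs (c k)) n (fun k => Rabs_pos _)); lra).
  exists ((dot n c (proj1_sig x) - al) / M). split; [apply Rdiv_lt_0_compat; lra|].
  intros y Hy. unfold euclid_dist in Hy. simpl in Hy.
  generalize (dot_lip n c (proj1_sig x) (proj1_sig y)). intros Hl.
  set (d := sqrt (sum_f_R0 (fun j => (proj1_sig x j - proj1_sig y j) ^ 2) n)) in *.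
  assert (Hd : 0 <= d) by (apply sqrt_positivity, cond_pos_sum; intros j; apply pow2_ge_0).
  assert (M * d < dot n c (proj1_sig x) - al).
  { apply (Rmult_lt_compat_l M) in Hy; auto.
    replace (M * ((dot n c (proj1_sig x) - al) / M)) with (dot n c (proj1_sig x) - al) in Hy
      by (field; lra). exact Hy. }
  assert (sum_f_R0 (fun k => Rabs (c k)) n * d <= M * d) by (apply Rmult_le_compat_r; unfold M; lra).
  split_Rabs; lra.
Qed.

Lemma dot_neg n c y : dot n (fun k => - c k) y = - dot n c y.
Proof.
  replace (fun k => - c k) with (fun k => (-1) * c k + 0 * c k)
    by (apply functional_extensionality; intros; ring).
  rewrite dot_linl; ring.
Qed.

Lemma dot_open_lt n (c : nat -> R) (al : R) : is_open (sphere n) (fun y => dot n c (pt y) < al).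
Proof.
  eapply open_ext; [apply (dot_open_gt n (fun k => - c k) (- al))|].
  intro y; cbv beta; rewrite dot_neg; lra.
Qed.

Lemma sph_dist n (a b : sphere n) :
  @euclid_dist (S n) (proj1_sig a) (proj1_sig b) = sqrt (2 - 2 * dot n (pt a) (pt b)).
Proof. unfold euclid_dist. simpl. f_equal. apply dist_sq. Qed.

Lemma sph_nbhd n (O : sphere n -> Prop) (c : sphere n) :
  is_open (sphere n) O -> O c -> exists eta, 0 < eta /\ forall y, 1 - eta < dot n (pt c) (pt y) -> O y.
Proof.
  intros [U0 [HU0 EU0]] Oc. apply EU0 in Oc. destruct (HU0 _ Oc) as [r [Hr Hb]].
  exists (r * r / 2). split; [nra|]. intros y Hy. apply EU0, Hb. rewrite sph_dist.
  generalize (dot_le1 n c y); intros.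
  rewrite <- (sqrt_square r) by lra. apply sqrt_lt_1_alt. lra.
Qed.

Lemma sph_haus n : hausdorff (sphere n).
Proof.
  intros a b Hab. generalize (dot_lt1 n a b Hab) (pt_unit n a); intros H1 H2.
  set (m := (1 + dot n (pt a) (pt b)) / 2).
  exists (fun y => m < dot n (pt a) (pt y)), (fun y => dot n (pt a) (pt y) < m).
  split; [apply dot_open_gt|split; [apply dot_open_lt|]].
  unfold m; split; [lra|split; [lra|]]. intros t; lra.
Qed.

Definition bv (k : nat) : nat -> R := fun j => if Nat.eqb j k then 1 else 0.

Lemma sum_single (f : nat -> R) n k : (k <= n)%nat -> (forall j, (j <= n)%nat -> j <> k -> f j = 0) ->
  sum_f_R0 f n = f k.
Proof.
  induction n as [|n IH]; intros Hk H.
  - replace k with 0%nat by lia. reflexivity.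
  - rewrite tech5. destruct (Nat.eq_dec k (S n)) as [->|Hne].
    + assert (E : forall m, (m <= n)%nat -> sum_f_R0 f m = 0).
      { induction m as [|m IHm]; intros Hm.
        - simpl. apply H; lia.
        - rewrite tech5, IHm, H; [ring|lia|lia|lia]. }
      rewrite E; [ring|lia].
    + rewrite IH, (H (S n)); [ring|lia|lia|lia|]. intros j Hj Hjk; apply H; lia.
Qed.

Lemma dot_bv n x k : (k <= n)%nat -> dot n x (bv k) = x k.
Proof.
  intros Hk. unfold dot. rewrite (sum_single _ n k Hk).
  - unfold bv. rewrite Nat.eqb_refl. ring.
  - intros j Hj Hjk. unfold bv. destruct (Nat.eqb j k) eqn:E; [apply Nat.eqb_eq in E; lia|ring].
Qed.

Lemma bv_zero n k j : (k <= n)%nat -> (S n <= j)%nat -> bv k j = 0.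
Proof. intros. unfold bv. destruct (Nat.eqb j k) eqn:E; auto. apply Nat.eqb_eq in E; lia. Qed.

Definition nrm (n : nat) (v : nat -> R) : nat -> R := fun k => v k / sqrt (dot n v v).

Lemma nrm_unit n v : 0 < dot n v v -> dot n (nrm n v) (nrm n v) = 1.
Proof.
  intros H. set (s := sqrt (dot n v v)).
  assert (Hs : s * s = dot n v v) by (apply sqrt_sqrt; lra).
  assert (Hs0 : 0 < s) by (apply sqrt_lt_R0; auto).
  change (dot n (nrm n v) (nrm n v)) with (sum_f_R0 (fun k => (v k / s) * (v k / s)) n).
  rewrite (sum_eq _ (fun k => (v k * v k) * / (s * s))) by (intros; cbv beta; field; lra).
  rewrite <- scal_sum. fold (dot n v v). rewrite <- Hs. field. lra.
Qed.

Lemma nrm_zero n v k : (forall k, (S n <= k)%nat -> v k = 0) -> (S n <= k)%nat -> nrm n v k = 0.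
Proof. intros H Hk. unfold nrm. rewrite H; auto. unfold Rdiv; ring. Qed.

Definition nrm_sph n v (Hz : forall k, (S n <= k)%nat -> v k = 0) (Hp : 0 < dot n v v) : sphere n :=
  mk_sph n (nrm n v) (fun k Hk => nrm_zero n v k Hz Hk) (nrm_unit n v Hp).

Lemma dot_nrm n c v : 0 < dot n v v -> dot n c (nrm n v) = dot n c v / sqrt (dot n v v).
Proof.
  intros H. unfold nrm.
  assert (0 < sqrt (dot n v v)) by (apply sqrt_lt_R0; auto).
  replace (fun k => v k / sqrt (dot n v v)) with (fun k => / sqrt (dot n v v) * v k)
    by (apply functional_extensionality; intros; field; lra).
  rewrite dot_scal. field. lra.
Qed.

Definition zv (n : nat) (v : nat -> R) := forall k, (S n <= k)%nat -> v k = 0.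

Lemma pt_zv n (y : sphere n) : zv n (pt y).
Proof. intros k Hk; apply pt_zero; auto. Qed.

Lemma zv_lin n a b x y : zv n x -> zv n y -> zv n (fun k => a * x k + b * y k).
Proof. intros Hx Hy k Hk. rewrite Hx, Hy; auto; ring. Qed.

Lemma zv_bv n k : (k <= n)%nat -> zv n (bv k).
Proof. intros Hk j Hj. apply bv_zero with n; auto. Qed.

Lemma two_terms (f : nat -> R) n : (1 <= n)%nat -> (forall j, 0 <= f j) -> f 0%nat + f 1%nat <= sum_f_R0 f n.
Proof.
  intros Hn Hf. induction n as [|n IH]; [lia|].
  destruct n as [|n].
  - simpl; lra.
  - rewrite tech5. generalize (IH ltac:(lia)) (Hf (S (S n))); lra.
Qed.

Lemma three_terms (f : nat -> R) n : (2 <= n)%nat -> (forall j, 0 <= f j) ->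
  f 0%nat + f 1%nat + f 2%nat <= sum_f_R0 f n.
Proof.
  intros Hn Hf. induction n as [|n IH]; [lia|].
  destruct (Nat.eq_dec n 1) as [->|Hn1].
  - simpl; lra.
  - rewrite tech5. generalize (IH ltac:(lia)) (Hf (S n)); lra.
Qed.

Lemma dot_lin3 n a b d x y w z :
  dot n z (fun k => a * x k + b * y k + d * w k) = a * dot n z x + b * dot n z y + d * dot n z w.
Proof.
  replace (fun k => a * x k + b * y k + d * w k) with
    (fun k => 1 * (fun k => a * x k + b * y k) k + d * w k)
    by (apply functional_extensionality; intros; ring).
  rewrite dot_lin, dot_lin. ring.
Qed.

Lemma perp1 n (c : sphere n) : (1 <= n)%nat -> exists e : sphere n, dot n (pt c) (pt e) = 0.
Proof.
  intros Hn.
  assert (Hk : exists k, (k <= n)%nat /\ pt c k * pt c k < 1).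
  { generalize (two_terms (fun k => pt c k * pt c k) n Hn (fun j => ltac:(nra))).
    fold (dot n (pt c) (pt c)). rewrite pt_unit. intros H.
    destruct (Rlt_dec (pt c 0%nat * pt c 0%nat) 1); [exists 0%nat; split; [lia|auto]|].
    exists 1%nat; split; [lia|]. generalize (Rle_0_sqr (pt c 0%nat)); unfold Rsqr; lra. }
  destruct Hk as [k [Hk Hck]].
  set (r := fun j => 1 * bv k j + (- pt c k) * pt c j).
  assert (Hz : zv n r) by (apply zv_lin; [apply zv_bv; auto | apply pt_zv]).
  assert (Hcr : dot n (pt c) r = 0).
  { unfold r. rewrite dot_lin, dot_bv, pt_unit by auto. ring. }
  assert (Hrr : dot n r r = 1 - pt c k * pt c k).
  { assert (Hrc : dot n r (pt c) = 0) by (rewrite dot_sym; auto).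
    unfold r at 2. rewrite dot_lin, dot_bv, Hrc by auto. unfold r, bv. rewrite Nat.eqb_refl. ring. }
  assert (Hp : 0 < dot n r r) by lra.
  exists (nrm_sph n r Hz Hp). unfold nrm_sph. rewrite mk_sph_pt, dot_nrm, Hcr by auto. unfold Rdiv; ring.
Qed.

Lemma perp2 n (c e : sphere n) : (2 <= n)%nat -> dot n (pt c) (pt e) = 0 ->
  exists e3 : sphere n, dot n (pt c) (pt e3) = 0 /\ dot n (pt e) (pt e3) = 0.
Proof.
  intros Hn Hce.
  assert (Hk : exists k, (k <= n)%nat /\ pt c k * pt c k + pt e k * pt e k < 1).
  { generalize (three_terms (fun k => pt c k * pt c k) n Hn (fun j => ltac:(nra)))
      (three_terms (fun k => pt e k * pt e k) n Hn (fun j => ltac:(nra))).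
    fold (dot n (pt c) (pt c)). fold (dot n (pt e) (pt e)). rewrite !pt_unit. intros H1 H2.
    destruct (Rlt_dec (pt c 0%nat * pt c 0%nat + pt e 0%nat * pt e 0%nat) 1); [exists 0%nat; split; [lia|auto]|].
    destruct (Rlt_dec (pt c 1%nat * pt c 1%nat + pt e 1%nat * pt e 1%nat) 1); [exists 1%nat; split; [lia|auto]|].
    exists 2%nat; split; [lia|]. lra. }
  destruct Hk as [k [Hk Hck]].
  set (r := fun j => 1 * bv k j + (- pt c k) * pt c j + (- pt e k) * pt e j).
  assert (Hz : zv n r).
  { intros j Hj. unfold r. rewrite (bv_zero n k j Hk Hj), (pt_zero n c j Hj), (pt_zero n e j Hj). ring. }
  assert (Hec : dot n (pt e) (pt c) = 0) by (rewrite dot_sym; auto).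
  assert (Hcr : dot n (pt c) r = 0).
  { unfold r. rewrite dot_lin3, dot_bv, pt_unit, Hce by auto. ring. }
  assert (Her : dot n (pt e) r = 0).
  { unfold r. rewrite dot_lin3, dot_bv, pt_unit, Hec by auto. ring. }
  assert (Hrr : dot n r r = 1 - pt c k * pt c k - pt e k * pt e k).
  { assert (Hrc : dot n r (pt c) = 0) by (rewrite dot_sym; auto).
    assert (Hre : dot n r (pt e) = 0) by (rewrite dot_sym; auto).
    unfold r at 2. rewrite dot_lin3, dot_bv, Hrc, Hre by auto. unfold r, bv. rewrite Nat.eqb_refl. ring. }
  assert (Hp : 0 < dot n r r) by lra.
  exists (nrm_sph n r Hz Hp). unfold nrm_sph. rewrite !mk_sph_pt, !dot_nrm, Hcr, Her by auto.
  unfold Rdiv; split; ring.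
Qed.

Lemma inv_sqrt_ge y : 0 <= y -> 1 - y <= / sqrt (1 + y).
Proof.
  intros Hy. assert (H1 : sqrt (1 + y) <= 1 + y).
  { rewrite <- (sqrt_square (1 + y)) at 2 by lra. apply sqrt_le_1_alt. nra. }
  assert (H0 : 0 < sqrt (1 + y)) by (apply sqrt_lt_R0; lra).
  apply Rle_trans with (/ (1 + y)).
  - apply (Rmult_le_reg_r (1 + y)); [lra|]. rewrite Rinv_l by lra. nra.
  - apply Rinv_le_contravar; lra.
Qed.

Lemma approx n (a : sphere n) (u : nat -> R) : zv n u -> dot n (pt a) u = 0 ->
  forall eps, 0 < eps -> exists t, 0 < t /\ exists w : sphere n,
    (forall c, dot n c (pt w) = (dot n c (pt a) + t * dot n c u) / sqrt (1 + t * t * dot n u u)) /\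
    1 - eps < dot n (pt a) (pt w).
Proof.
  intros Hz Hau eps Heps.
  set (q := dot n u u). assert (Hq : 0 <= q) by apply dot_nonneg.
  set (t := Rmin 1 (eps / (q + 1))).
  assert (Ht0 : 0 < t) by (unfold t; apply Rmin_glb_lt; [lra|apply Rdiv_lt_0_compat; lra]).
  assert (Ht1 : t <= 1) by apply Rmin_l.
  assert (Ht2 : t <= eps / (q + 1)) by apply Rmin_r.
  assert (Htq : t * t * q < eps).
  { assert (t * (q + 1) <= eps).
    { apply (Rmult_le_compat_r (q + 1)) in Ht2; [|lra]. unfold Rdiv in Ht2.
      rewrite Rmult_assoc, Rinv_l, Rmult_1_r in Ht2 by lra. exact Ht2. }
    nra. }
  exists t; split; auto.
  set (v := fun k => 1 * pt a k + t * u k).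
  assert (Hvz : zv n v) by (apply zv_lin; [apply pt_zv|auto]).
  assert (Hvv : dot n v v = 1 + t * t * q).
  { unfold v. rewrite dot_lin, !dot_linl, pt_unit, Hau, (dot_sym n u (pt a)), Hau. fold q. ring. }
  assert (Hp : 0 < dot n v v) by (rewrite Hvv; nra).
  exists (nrm_sph n v Hvz Hp). split.
  - intros c. unfold nrm_sph. rewrite mk_sph_pt, dot_nrm, Hvv by auto. unfold v. rewrite dot_lin. f_equal; ring.
  - unfold nrm_sph. rewrite mk_sph_pt, dot_nrm, Hvv by auto. unfold v. rewrite dot_lin, pt_unit, Hau.
    replace ((1 * 1 + t * 0) / sqrt (1 + t * t * q)) with (/ sqrt (1 + t * t * q)) by (field; apply Rgt_not_eq, sqrt_lt_R0; nra).
    generalize (inv_sqrt_ge (t * t * q) ltac:(nra)). lra.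
Qed.

Definition nbv (k : nat) : nat -> R := fun j => - bv k j.

Lemma sph_three n : (1 <= n)%nat -> exists y1 y2 y3 : sphere n, y1 <> y2 /\ y1 <> y3 /\ y2 <> y3.
Proof.
  intros Hn.
  assert (Z0 : zv n (bv 0)) by (apply zv_bv; lia).
  assert (Z1 : zv n (bv 1)) by (apply zv_bv; lia).
  assert (U0 : dot n (bv 0) (bv 0) = 1) by (rewrite dot_bv by lia; reflexivity).
  assert (U1 : dot n (bv 1) (bv 1) = 1) by (rewrite dot_bv by lia; reflexivity).
  assert (Zn : zv n (fun k => -1 * bv 0 k + 0 * bv 0 k)) by (apply zv_lin; auto).
  assert (Un : dot n (fun k => -1 * bv 0 k + 0 * bv 0 k) (fun k => -1 * bv 0 k + 0 * bv 0 k) = 1).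
  { rewrite dot_lin, !dot_linl, U0. ring. }
  exists (mk_sph n _ Z0 U0), (mk_sph n _ Zn Un), (mk_sph n _ Z1 U1).
  repeat split; intro E; apply (f_equal (fun y => pt y 0%nat)) in E; rewrite !mk_sph_pt in E;
    unfold bv in E; simpl in E; lra.
Qed.

Lemma cont_ed (f : R -> R) x : continuity_pt f x ->
  forall eps, 0 < eps -> exists del, 0 < del /\ forall y, Rabs (y - x) < del -> Rabs (f y - f x) < eps.
Proof.
  intros H eps Heps. destruct (H eps Heps) as [del [Hdel Hd]].
  exists del; split; auto. intros y Hy. destruct (Req_dec y x) as [->|Hne].
  - rewrite Rminus_diag, Rabs_R0; auto.
  - apply (Hd y). split; [split; [exact I|auto]|]. exact Hy.
Qed.

Definition sig01 (s : R) : R := Rmax 0 (Rmin 1 s).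

Lemma sig01_cases s : (s <= 0 /\ sig01 s = 0) \/ (0 <= s <= 1 /\ sig01 s = s) \/ (1 <= s /\ sig01 s = 1).
Proof.
  unfold sig01. destruct (Rle_dec 1 s) as [h|h].
  - rewrite Rmin_left by lra. rewrite Rmax_right by lra. right; right; split; lra.
  - rewrite Rmin_right by lra. destruct (Rle_dec 0 s) as [h2|h2].
    + rewrite Rmax_right by lra. right; left; split; lra.
    + rewrite Rmax_left by lra. left; split; lra.
Qed.

Lemma sig01_range s : 0 <= sig01 s <= 1.
Proof. destruct (sig01_cases s) as [[? ->]|[[? ->]|[? ->]]]; lra. Qed.

Lemma sig01_id s : 0 <= s <= 1 -> sig01 s = s.
Proof. intros H. destruct (sig01_cases s) as [[? ->]|[[? ->]|[? ->]]]; lra. Qed.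

Lemma sig01_cont x : continuity_pt sig01 x.
Proof.
  intros eps Heps. exists eps; split; auto. intros y [_ Hy]. simpl in *. unfold Rdist in *.
  destruct (sig01_cases x) as [[? ->]|[[? ->]|[? ->]]];
  destruct (sig01_cases y) as [[? ->]|[[? ->]|[? ->]]]; split_Rabs; lra.
Qed.

Lemma cont_plus f g x : continuity_pt f x -> continuity_pt g x -> continuity_pt (fun y => f y + g y) x.
Proof. intros; apply (continuity_pt_plus f g x); auto. Qed.
Lemma cont_mult f g x : continuity_pt f x -> continuity_pt g x -> continuity_pt (fun y => f y * g y) x.
Proof. intros; apply (continuity_pt_mult f g x); auto. Qed.
Lemma cont_div f g x : continuity_pt f x -> continuity_pt g x -> g x <> 0 -> continuity_pt (fun y => f y / g y) x.
Proof. intros; apply (continuity_pt_div f g x); auto. Qed.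
Lemma cont_const c x : continuity_pt (fun _ => c) x.
Proof. apply continuity_pt_const. intros ? ?; auto. Qed.
Lemma cont_sqrt f x : continuity_pt f x -> 0 <= f x -> continuity_pt (fun y => sqrt (f y)) x.
Proof. intros H H0. apply (continuity_pt_comp f sqrt x H). apply continuity_pt_sqrt; auto. Qed.

Lemma seg_cont (A B P0 P1 P2 : R) x :
  (forall s, 0 < P0 + P1 * sig01 s + P2 * (sig01 s * sig01 s)) ->
  continuity_pt (fun s => (A + B * sig01 s) / sqrt (P0 + P1 * sig01 s + P2 * (sig01 s * sig01 s))) x.
Proof.
  intros HP. apply cont_div.
  - apply cont_plus; [apply cont_const|apply cont_mult; [apply cont_const|apply sig01_cont]].
  - apply cont_sqrt; [|generalize (HP x); lra].
    apply cont_plus; [apply cont_plus|]; [apply cont_const| |];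
      repeat apply cont_mult; try apply cont_const; apply sig01_cont.
  - apply Rgt_not_eq, sqrt_lt_R0; auto.
Qed.

Lemma dot_pos_of n c v : dot n c v <> 0 -> 0 < dot n v v.
Proof.
  intros H. destruct (dot_nonneg n v) as [H'|H']; auto. exfalso. apply H.
  assert (Hv : forall k, (k <= n)%nat -> v k = 0).
  { intros k Hk. generalize (sum_zero_each (fun k => v k * v k) n k (fun j => ltac:(nra)) (eq_sym H') Hk).
    intros; nra. }
  unfold dot. rewrite (sum_eq _ (fun _ => 0)) by (intros k Hk; rewrite Hv; auto; ring).
  rewrite sum_cte. ring.
Qed.

Definition vseg (x y : nat -> R) (s : R) : nat -> R := fun k => (1 - s) * x k + s * y k.

Lemma Q_conn n (a e : sphere n) eta : eta <= 1 ->
  conn (sphere n) (fun y => 1 - eta < dot n (pt a) (pt y) /\ 0 < dot n (pt e) (pt y)).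
Proof.
  intros Heta. apply conn_chain. intros x y [Qx1 Qx2] [Qy1 Qy2].
  set (X := pt x) in *. set (Y := pt y) in *.
  set (D := dot n X Y).
  assert (HD : D <= 1) by apply dot_le1.
  assert (HXX : dot n X X = 1) by apply pt_unit.
  assert (HYY : dot n Y Y = 1) by apply pt_unit.
  assert (HYX : dot n Y X = D) by apply dot_sym.
  assert (Hz : forall s, zv n (vseg X Y (sig01 s))) by (intros; apply zv_lin; apply pt_zv).
  assert (Hvv : forall s, dot n (vseg X Y s) (vseg X Y s) = 1 + (2 * D - 2) * s + (2 - 2 * D) * (s * s)).
  { intros s. unfold vseg. rewrite dot_lin, !dot_linl. fold X Y. rewrite HXX, HYY, HYX. fold D. ring. }
  assert (Hcv : forall c s, dot n c (vseg X Y s) = dot n c X + (dot n c Y - dot n c X) * s).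
  { intros c s. unfold vseg. rewrite dot_lin. ring. }
  assert (Hev : forall s, 0 < dot n (pt e) (vseg X Y (sig01 s))).
  { intros s. rewrite Hcv. generalize (sig01_range s). intros. nra. }
  assert (Hp : forall s, 0 < dot n (vseg X Y (sig01 s)) (vseg X Y (sig01 s))).
  { intros s. apply (dot_pos_of n (pt e)). generalize (Hev s); lra. }
  set (g := fun s => nrm_sph n (vseg X Y (sig01 s)) (Hz s) (Hp s)).
  assert (Hg : forall c s, dot n c (pt (g s)) =
     (dot n c X + (dot n c Y - dot n c X) * sig01 s) /
        sqrt (1 + (2 * D - 2) * sig01 s + (2 - 2 * D) * (sig01 s * sig01 s))).
  { intros c s. unfold g, nrm_sph. rewrite mk_sph_pt, dot_nrm by apply Hp. rewrite Hcv, Hvv. reflexivity. }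
  assert (Hpos : forall s, 0 < 1 + (2 * D - 2) * sig01 s + (2 - 2 * D) * (sig01 s * sig01 s)).
  { intros s. rewrite <- Hvv. apply Hp. }
  assert (Hcont : continuous (X := R_top) (Y := sphere n) g).
  { intros O HO s Os.
    destruct (sph_nbhd n O (g s) HO Os) as [eta' [Heta' HO']].
    destruct (cont_ed _ s (seg_cont (dot n (pt (g s)) X) (dot n (pt (g s)) Y - dot n (pt (g s)) X)
                 1 (2 * D - 2) (2 - 2 * D) s Hpos) eta' Heta') as [del [Hdel Hd]].
    exists del; split; auto. intros s' Hs'. apply HO'.
    assert (Rabs (s' - s) < del) by (split_Rabs; lra).
    specialize (Hd s' H). rewrite <- !Hg in Hd. rewrite pt_unit in Hd. split_Rabs; lra. }
  exists (fun w => exists s, (0 <= s <= 1) /\ g s = w). split; [|split; [|split]].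
  - apply (conn_image_cont R_top (sphere n) g (fun s => 0 <= s <= 1) Hcont). apply conv_conn. intros; simpl in *; lra.
  - intros w [s [Hs <-]]. rewrite !Hg. rewrite sig01_id by auto.
    assert (Hsq : sqrt (1 + (2 * D - 2) * s + (2 - 2 * D) * (s * s)) <= 1).
    { assert (0 <= (1 - D) * (s * (1 - s))) by (apply Rmult_le_pos; [lra | apply Rmult_le_pos; lra]).
      apply Rle_trans with (sqrt 1); [apply sqrt_le_1_alt; lra | rewrite sqrt_1; lra]. }
    assert (Hsq0 : 0 < sqrt (1 + (2 * D - 2) * s + (2 - 2 * D) * (s * s))).
    { apply sqrt_lt_R0. generalize (Hpos s); rewrite sig01_id; auto. }
    set (q := sqrt (1 + (2 * D - 2) * s + (2 - 2 * D) * (s * s))) in *.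
    split.
    + assert (1 - eta < dot n (pt a) X + (dot n (pt a) Y - dot n (pt a) X) * s).
      { assert (0 <= s * (dot n (pt a) Y - (1 - eta))) by (apply Rmult_le_pos; lra).
        assert (0 <= (1 - s) * (dot n (pt a) X - (1 - eta))) by (apply Rmult_le_pos; lra).
        destruct (Rle_dec s (1/2)).
        - assert ((1/2) * (dot n (pt a) X - (1 - eta)) <= (1 - s) * (dot n (pt a) X - (1 - eta)))
            by (apply Rmult_le_compat_r; lra). lra.
        - assert ((1/2) * (dot n (pt a) Y - (1 - eta)) <= s * (dot n (pt a) Y - (1 - eta)))
            by (apply Rmult_le_compat_r; lra). lra. }
      apply Rlt_le_trans with (dot n (pt a) X + (dot n (pt a) Y - dot n (pt a) X) * s); auto.
      unfold Rdiv. apply (Rmult_le_reg_r q); auto. rewrite Rmult_assoc, Rinv_l by lra. nra.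
    + apply Rdiv_lt_0_compat; auto. nra.
  - exists 0. split; [lra|]. apply sph_ext. intros k. unfold g, nrm_sph. rewrite mk_sph_pt.
    unfold nrm. rewrite Hvv, sig01_id by lra. unfold vseg.
    replace (1 + (2 * D - 2) * 0 + (2 - 2 * D) * (0 * 0)) with 1 by ring. rewrite sqrt_1. fold X. field.
  - exists 1. split; [lra|]. apply sph_ext. intros k. unfold g, nrm_sph. rewrite mk_sph_pt.
    unfold nrm. rewrite Hvv, sig01_id by lra. unfold vseg.
    replace (1 + (2 * D - 2) * 1 + (2 - 2 * D) * (1 * 1)) with 1 by ring. rewrite sqrt_1. fold Y. field.
Qed.

Definition box (m : nat) (y x : nat -> R) (d : R) := forall k, (k < m)%nat -> Rabs (y k - x k) < d.
Definition bopen (m : nat) (A : (nat -> R) -> Prop) :=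
  forall x, A x -> exists d, 0 < d /\ forall y, box m y x d -> A y.
Definition cube (m : nat) (x : nat -> R) := forall k, (k < m)%nat -> Rabs (x k) <= 1.
Definition fcover {T : Type} (F : (T -> Prop) -> Prop) (K : T -> Prop) :=
  exists l, (forall U, In U l -> F U) /\ forall x, K x -> exists U, In U l /\ U x.

Definition upd (m : nat) (x : nat -> R) (t : R) : nat -> R := fun k => if Nat.eqb k m then t else x k.

Lemma cube_cpt m : forall F, (forall U, F U -> bopen m U) -> (forall x, cube m x -> exists U, F U /\ U x) ->
  fcover F (cube m).
Proof.
  induction m as [|m IH]; intros F HF Hcov.
  - destruct (Hcov (fun _ => 0)) as [U [FU Ux]]; [intros k Hk; lia|].
    destruct (HF U FU _ Ux) as [d [Hd HU]].
    exists (U :: nil); split; [intros U' [<-|[]]; auto|].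
    intros x _; exists U; split; [left; auto|]. apply HU. intros k Hk; lia.
  - assert (Tube : forall t, Rabs t <= 1 -> exists d, 0 < d /\ exists lU, (forall U, In U lU -> F U) /\
              forall y, cube (S m) y -> Rabs (y m - t) < d -> exists U, In U lU /\ U y).
    { intros t Ht.
      set (O := fun (U : (nat -> R) -> Prop) (d : R) (x : nat -> R) => exists x0 eta, 0 < eta /\
                  (forall k, (k < m)%nat -> Rabs (x k - x0 k) + eta < d) /\
                  forall y, (forall k, (k < m)%nat -> Rabs (y k - x0 k) < 2 * d) -> Rabs (y m - t) < 2 * d -> U y).
      set (G := fun V => exists U d, F U /\ 0 < d /\ forall x, V x <-> O U d x).
      destruct (IH G) as [l [Hl Hlc]].
      - intros V [U [d [FU [Hd EV]]]] x Vx. apply EV in Vx as [x0 [eta [Heta [Hb HU]]]].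
        exists (eta / 2). split; [lra|]. intros y Hy. apply EV. exists x0, (eta / 2).
        split; [lra|split; auto]. intros k Hk. specialize (Hb k Hk); specialize (Hy k Hk). split_Rabs; lra.
      - intros x Hx. set (x' := upd m x t).
        assert (Cx' : cube (S m) x').
        { intros k Hk; unfold x', upd; destruct (Nat.eqb k m) eqn:E; auto.
          apply Hx; apply Nat.eqb_neq in E; lia. }
        destruct (Hcov x' Cx') as [U [FU Ux']]. destruct (HF U FU x' Ux') as [d0 [Hd0 Hb]].
        exists (O U (d0 / 2)). split.
        + exists U, (d0 / 2). split; auto. split; [lra| intros; reflexivity].
        + exists x', (d0 / 4). split; [lra|split].
          * intros k Hk. unfold x', upd. destruct (Nat.eqb k m) eqn:E; [apply Nat.eqb_eq in E; lia|].
            rewrite Rminus_diag, Rabs_R0; lra.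
          * intros y Hy Hym. apply Hb. intros k Hk. destruct (Nat.eq_dec k m) as [->|Hne].
            -- unfold x', upd. rewrite Nat.eqb_refl. lra.
            -- assert (Hkm : (k < m)%nat) by lia. specialize (Hy k Hkm). lra.
      - assert (Hcol : forall l', (forall V, In V l' -> G V) -> exists d, 0 < d /\ exists lU,
                  (forall U, In U lU -> F U) /\
                  forall y, (exists V, In V l' /\ V y) -> Rabs (y m - t) < d -> exists U, In U lU /\ U y).
        { induction l' as [|V l' IHl]; intros Hl'.
          - exists 1; split; [lra|]. exists nil; split; [intros ? []|]. intros y [V [[] _]].
          - destruct (Hl' V (or_introl eq_refl)) as [U [d [FU [Hd EV]]]].
            destruct IHl as [d' [Hd' [lU [HlU HlUc]]]]; [intros; apply Hl'; right; auto|].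
            exists (Rmin d d'); split; [apply Rmin_glb_lt; auto|]. exists (U :: lU). split.
            + intros U' [<-|?]; auto.
            + intros y [V0 [[<-|HV0] V0y]] Hym.
              * apply EV in V0y as [x0 [eta [Heta [Hb HU]]]]. exists U; split; [left; auto|].
                apply HU.
                -- intros k Hk. specialize (Hb k Hk). split_Rabs; lra.
                -- generalize (Rmin_l d d'); lra.
              * destruct (HlUc y) as [U' [? ?]]; [eauto| generalize (Rmin_r d d'); lra |].
                exists U'; split; [right|]; auto. }
        destruct (Hcol l Hl) as [d [Hd [lU [HlU HlUc]]]].
        exists d; split; auto. exists lU; split; auto.
        intros y Hy Hym. apply HlUc; auto. apply Hlc. intros k Hk; apply Hy; lia. }
    set (H := fun A : R -> Prop => exists t, Rabs t <= 1 /\ exists d, 0 < d /\ (forall s, A s <-> Rabs (s - t) < d) /\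
                exists lU, (forall U, In U lU -> F U) /\
                  forall y, cube (S m) y -> Rabs (y m - t) < d -> exists U, In U lU /\ U y).
    destruct (interval_cpt (-1) 1 ltac:(lra) H) as [lA [HlA HlAc]].
    + intros A [t [_ [d [Hd [EA _]]]]]. intros s As. apply EA in As.
      exists (d - Rabs (s - t)). split; [lra|]. intros s' Hs'. apply EA. split_Rabs; lra.
    + intros s Hs. destruct (Tube s) as [d [Hd [lU [HlU HlUc]]]]; [split_Rabs; lra|].
      exists (fun s' => Rabs (s' - s) < d). split.
      * exists s. split; [split_Rabs; lra|]. exists d. split; auto. split; [intros; reflexivity|]. eauto.
      * rewrite Rminus_diag, Rabs_R0; auto.
    + assert (Hcol : forall l', (forall A, In A l' -> H A) -> exists lU, (forall U, In U lU -> F U) /\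
                forall y, cube (S m) y -> (exists A, In A l' /\ A (y m)) -> exists U, In U lU /\ U y).
      { induction l' as [|A l' IHl]; intros Hl'.
        - exists nil; split; [intros ? []|]. intros y _ [A [[] _]].
        - destruct (Hl' A (or_introl eq_refl)) as [t [_ [d [Hd [EA [lU [HlU HlUc]]]]]]].
          destruct IHl as [lU' [HlU' HlUc']]; [intros; apply Hl'; right; auto|].
          exists (lU ++ lU'). split.
          + intros U HU. apply in_app_or in HU as [?|?]; auto.
          + intros y Hy [A0 [[<-|HA0] A0y]].
            * apply EA in A0y. destruct (HlUc y Hy A0y) as [U [? ?]].
              exists U; split; auto. apply in_or_app; left; auto.
            * destruct (HlUc' y Hy) as [U [? ?]]; eauto. exists U; split; auto. apply in_or_app; right; auto. }
      destruct (Hcol lA HlA) as [lU [HlU HlUc]]. exists lU; split; auto.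
      intros y Hy. apply HlUc; auto. apply HlAc. specialize (Hy m ltac:(lia)). split_Rabs; lra.
Qed.

Definition trunc (n : nat) (x : nat -> R) : nat -> R := fun k => if Nat.leb k n then x k else 0.
Lemma trunc_zv n x : forall k, (S n <= k)%nat -> trunc n x k = 0.
Proof. intros k Hk. unfold trunc. destruct (Nat.leb k n) eqn:E; auto. apply Nat.leb_le in E; lia. Qed.
Lemma trunc_le n x k : (k <= n)%nat -> trunc n x k = x k.
Proof. intros Hk. unfold trunc. destruct (Nat.leb k n) eqn:E; auto. apply Nat.leb_gt in E; lia. Qed.
Definition etr (n : nat) (x : nat -> R) : euclid (S n) :=
  exist (fun v => forall k, (S n <= k)%nat -> v k = 0) (trunc n x) (trunc_zv n x).

Lemma sum_lt (f g : nat -> R) n : (forall k, (k <= n)%nat -> f k < g k) -> sum_f_R0 f n < sum_f_R0 g n.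
Proof.
  induction n as [|n IH]; intros H; simpl.
  - apply H; lia.
  - generalize (IH (fun k Hk => H k ltac:(lia))) (H (S n) ltac:(lia)); lra.
Qed.

Lemma dotsq_cont n x eps : 0 < eps -> exists d, 0 < d /\
  forall y, box (S n) y x d -> Rabs (dot n y y - dot n x x) < eps.
Proof.
  intros Heps. set (M := sum_f_R0 (fun k => 2 * Rabs (x k) + 1) n + 1).
  assert (HM0 : 0 <= sum_f_R0 (fun k => 2 * Rabs (x k) + 1) n)
    by (apply cond_pos_sum; intros; generalize (Rabs_pos (x n0)); lra).
  assert (HM : 0 < M) by (unfold M; lra).
  set (d := Rmin 1 (eps / M)).
  assert (Hd0 : 0 < d) by (unfold d; apply Rmin_glb_lt; [lra|apply Rdiv_lt_0_compat; lra]).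
  assert (Hd1 : d <= 1) by apply Rmin_l.
  assert (HdM : d * M <= eps).
  { generalize (Rmin_r 1 (eps / M)); fold d; intros H.
    apply (Rmult_le_compat_r M) in H; [|lra]. unfold Rdiv in H.
    rewrite Rmult_assoc, Rinv_l, Rmult_1_r in H by lra. exact H. }
  exists d; split; auto. intros y Hy.
  unfold dot. rewrite <- minus_sum.
  eapply Rle_lt_trans; [apply sum_f_R0_triangle|].
  apply Rle_lt_trans with (sum_f_R0 (fun k => d * (2 * Rabs (x k) + 1)) n).
  - apply sum_Rle. intros k Hk. specialize (Hy k ltac:(lia)).
    replace (y k * y k - x k * x k) with ((y k - x k) * (y k + x k)) by ring. rewrite Rabs_mult.
    apply Rmult_le_compat; try apply Rabs_pos; [lra|]. split_Rabs; lra.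
  - rewrite (sum_eq _ (fun k => (2 * Rabs (x k) + 1) * d)) by (intros; ring). rewrite <- scal_sum.
    assert (d * sum_f_R0 (fun k => 2 * Rabs (x k) + 1) n < d * M) by (apply Rmult_lt_compat_l; unfold M; lra).
    lra.
Qed.

Lemma etr_pt n (y : sphere n) : etr n (pt y) = proj1_sig y.
Proof.
  assert (E : trunc n (pt y) = pt y).
  { apply functional_extensionality. intros k.
    destruct (Nat.le_gt_cases k n) as [Hk|Hk].
    - rewrite trunc_le; auto.
    - rewrite trunc_zv by lia. symmetry. apply (pt_zero n y k). lia. }
  unfold etr. generalize (trunc_zv n (pt y)). rewrite E. intros H.
  destruct y as [[v Hv] Hs]. unfold pt; simpl. f_equal. apply proof_irrelevance.
Qed.

Lemma sph_cpt n : cpt (sphere n) (fun _ => True).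
Proof.
  intros F HF Hcov.
  set (AV := fun (V : sphere n -> Prop) (x : nat -> R) => exists U0, is_open (euclid (S n)) U0 /\
               (forall y : sphere n, V y <-> U0 (proj1_sig y)) /\ U0 (etr n x)).
  set (F' := fun A : (nat -> R) -> Prop => (exists V, F V /\ forall x, A x <-> AV V x) \/
               (forall x, A x <-> dot n x x < 1) \/ (forall x, A x <-> 1 < dot n x x)).
  destruct (cube_cpt (S n) F') as [l [Hl Hlc]].
  - intros A [[V [FV EA]]|[EA|EA]] x Ax; apply EA in Ax.
    + destruct Ax as [U0 [HU0 [EV Ux]]]. destruct (HU0 _ Ux) as [eps [Heps Hb]].
      assert (HS : 1 <= INR (S n)) by (rewrite S_INR; generalize (pos_INR n); lra).
      exists (eps / INR (S n)). split; [apply Rdiv_lt_0_compat; lra|].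
      intros y Hy. apply EA. exists U0. split; auto. split; auto. apply Hb.
      unfold euclid_dist. simpl.
      rewrite (sum_eq _ (fun k => (x k - y k) ^ 2)) by (intros; rewrite !trunc_le; auto).
      rewrite <- (sqrt_square eps) by lra. apply sqrt_lt_1_alt. split; [apply cond_pos_sum; intros; apply pow2_ge_0|].
      apply Rlt_le_trans with (sum_f_R0 (fun _ => (eps / INR (S n)) ^ 2) n).
      * apply sum_lt. intros k Hk. specialize (Hy k ltac:(lia)).
        assert (Rabs (x k - y k) < eps / INR (S n)) by (split_Rabs; lra).
        rewrite <- (Rsqr_pow2 (x k - y k)), Rsqr_abs, Rsqr_pow2. clear - H. generalize (Rabs_pos (x k - y k)). set (b := eps / INR (S n)) in *. clearbody b. intros; nra.
      * rewrite sum_cte. unfold Rdiv.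
        replace ((eps * / INR (S n)) ^ 2 * INR (S n)) with (eps * eps * / INR (S n)) by (field; lra).
        assert (/ INR (S n) <= 1) by (rewrite <- Rinv_1; apply Rinv_le_contravar; lra).
        assert (0 < / INR (S n)) by (apply Rinv_0_lt_compat; lra). nra.
    + destruct (dotsq_cont n x (1 - dot n x x) ltac:(lra)) as [d [Hd Hb]].
      exists d; split; auto. intros y Hy. apply EA. specialize (Hb y Hy). split_Rabs; lra.
    + destruct (dotsq_cont n x (dot n x x - 1) ltac:(lra)) as [d [Hd Hb]].
      exists d; split; auto. intros y Hy. apply EA. specialize (Hb y Hy). split_Rabs; lra.
  - intros x Hx. destruct (Rtotal_order (dot n x x) 1) as [Hlt|[Heq|Hgt]].
    + exists (fun x => dot n x x < 1). split; auto. right; left; tauto.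
    + assert (Hs : sum_f_R0 (fun k => proj1_sig (etr n x) k ^ 2) n = 1).
      { rewrite <- Heq. unfold dot. apply sum_eq. intros k Hk. simpl. rewrite trunc_le; auto; ring. }
      set (y := exist _ (etr n x) Hs : sphere n).
      destruct (Hcov y I) as [V [FV Vy]]. destruct (HF V FV) as [U0 [HU0 EV]].
      exists (AV V). split.
      * left. exists V; split; auto. tauto.
      * exists U0. split; auto. split; auto. apply EV in Vy. exact Vy.
    + exists (fun x => 1 < dot n x x). split; auto. right; right; tauto.
  - assert (Z0 : zv n (bv 0)) by (apply zv_bv; lia).
    assert (U0 : dot n (bv 0) (bv 0) = 1) by (rewrite dot_bv by lia; reflexivity).
    destruct (Hcov (mk_sph n _ Z0 U0) I) as [V0 [FV0 _]].
    destruct (list_pick (fun A V => F V /\ forall y : sphere n, A (pt y) -> V y) l) as [l' [H1 H2]].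
    + intros A HA. destruct (Hl A HA) as [[V [FV EA]]|[EA|EA]].
      * exists V. split; auto. intros y Ay. apply EA in Ay as [U0' [_ [EV Uy]]].
        apply EV. rewrite <- etr_pt. exact Uy.
      * exists V0. split; auto. intros y Ay. apply EA in Ay. rewrite pt_unit in Ay. lra.
      * exists V0. split; auto. intros y Ay. apply EA in Ay. rewrite pt_unit in Ay. lra.
    + exists l'. split.
      * intros V HV. destruct (H1 V HV) as [A [_ [? _]]]; auto.
      * intros y _. destruct (Hlc (pt y)) as [A [HA Ay]].
        { intros k Hk. generalize (sum_term_le (fun k => pt y k * pt y k) n k (fun j => ltac:(nra)) ltac:(lia)).
          fold (dot n (pt y) (pt y)). rewrite pt_unit. intros. split_Rabs; nra. }
        destruct (H2 A HA) as [V [HV [_ HAV]]]. exists V; split; auto.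
Qed.

Lemma sph_neg n (e : sphere n) : exists e' : sphere n, forall v, dot n (pt e') v = - dot n (pt e) v.
Proof.
  assert (Hz : zv n (fun k => -1 * pt e k + 0 * pt e k)) by (apply zv_lin; apply pt_zv).
  assert (Hu : dot n (fun k => -1 * pt e k + 0 * pt e k) (fun k => -1 * pt e k + 0 * pt e k) = 1).
  { rewrite dot_lin, !dot_linl, pt_unit. ring. }
  exists (mk_sph n _ Hz Hu). intros v. rewrite mk_sph_pt, dot_linl. ring.
Qed.

Lemma tangent n (p y : sphere n) : y <> p -> 0 < dot n (pt p) (pt y) ->
  exists e : sphere n, dot n (pt p) (pt e) = 0 /\ 0 < dot n (pt e) (pt y).
Proof.
  intros Hyp Hd. assert (Hd1 : dot n (pt p) (pt y) < 1) by (apply dot_lt1; auto).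
  set (d := dot n (pt p) (pt y)) in *.
  set (v := fun k => 1 * pt y k + (- d) * pt p k).
  assert (Hz : zv n v) by (apply zv_lin; apply pt_zv).
  assert (Hyp' : dot n (pt y) (pt p) = d) by (unfold d; apply dot_sym).
  assert (Hpv : dot n (pt p) v = 0) by (unfold v; rewrite dot_lin, pt_unit; fold d; ring).
  assert (Hyv : dot n (pt y) v = 1 - d * d) by (unfold v; rewrite dot_lin, pt_unit, Hyp'; ring).
  assert (Hvv : dot n v v = 1 - d * d).
  { unfold v at 2. rewrite dot_lin. rewrite (dot_sym n v (pt y)), (dot_sym n v (pt p)), Hyv, Hpv. ring. }
  assert (Hp : 0 < dot n v v) by (rewrite Hvv; nra).
  exists (nrm_sph n v Hz Hp). unfold nrm_sph. rewrite mk_sph_pt. split.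
  - rewrite dot_nrm, Hpv by auto. unfold Rdiv; ring.
  - rewrite dot_sym, dot_nrm, Hyv by auto. apply Rdiv_lt_0_compat; [nra|apply sqrt_lt_R0; auto].
Qed.

Lemma dot1 (a b : nat -> R) : dot 1 a b = a 0%nat * b 0%nat + a 1%nat * b 1%nat.
Proof. reflexivity. Qed.

Lemma s1_eq (c e y : sphere 1) : dot 1 (pt c) (pt e) = 0 -> dot 1 (pt e) (pt y) = 0 ->
  0 < dot 1 (pt c) (pt y) -> y = c.
Proof.
  intros H1 H2 H3. generalize (pt_unit 1 c) (pt_unit 1 e) (pt_unit 1 y). rewrite !dot1 in *.
  set (c0 := pt c 0%nat) in *. set (c1 := pt c 1%nat) in *.
  set (e0 := pt e 0%nat) in *. set (e1 := pt e 1%nat) in *.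
  set (y0 := pt y 0%nat) in *. set (y1 := pt y 1%nat) in *. intros Uc Ue Uy.
  set (k := c1 * e0 - c0 * e1). set (k' := y1 * e0 - y0 * e1).
  assert (Ec0 : c0 = - e1 * k).
  { unfold k. assert (e0 * (c0 * e0 + c1 * e1) = 0) by (rewrite H1; ring).
    assert (c0 * (e0 * e0 + e1 * e1) = c0) by (rewrite Ue; ring). nra. }
  assert (Ec1 : c1 = e0 * k).
  { unfold k. assert (e1 * (c0 * e0 + c1 * e1) = 0) by (rewrite H1; ring).
    assert (c1 * (e0 * e0 + e1 * e1) = c1) by (rewrite Ue; ring). nra. }
  assert (Ey0 : y0 = - e1 * k').
  { unfold k'. assert (e0 * (e0 * y0 + e1 * y1) = 0) by (rewrite H2; ring).
    assert (y0 * (e0 * e0 + e1 * e1) = y0) by (rewrite Ue; ring). nra. }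
  assert (Ey1 : y1 = e0 * k').
  { unfold k'. assert (e1 * (e0 * y0 + e1 * y1) = 0) by (rewrite H2; ring).
    assert (y1 * (e0 * e0 + e1 * e1) = y1) by (rewrite Ue; ring). nra. }
  assert (Kk : k * k = 1).
  { rewrite Ec0, Ec1 in Uc. replace (- e1 * k * (- e1 * k) + e0 * k * (e0 * k)) with (k * k * (e0 * e0 + e1 * e1)) in Uc by ring.
    rewrite Ue in Uc. lra. }
  assert (Kk' : k' * k' = 1).
  { rewrite Ey0, Ey1 in Uy. replace (- e1 * k' * (- e1 * k') + e0 * k' * (e0 * k')) with (k' * k' * (e0 * e0 + e1 * e1)) in Uy by ring.
    rewrite Ue in Uy. lra. }
  assert (Hkk : 0 < k * k').
  { rewrite Ec0, Ec1, Ey0, Ey1 in H3.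
    replace (- e1 * k * (- e1 * k') + e0 * k * (e0 * k')) with (k * k' * (e0 * e0 + e1 * e1)) in H3 by ring.
    rewrite Ue in H3. lra. }
  assert (Ekk : k = k').
  { assert ((k - k') * (k - k') = 2 - 2 * (k * k')) by (replace 2 with (k * k + k' * k') at 1 by lra; ring).
    assert ((k * k') * (k * k') = 1) by (replace 1 with ((k * k) * (k' * k')) by (rewrite Kk, Kk'; ring); ring).
    assert (k * k' = 1) by nra. nra. }
  apply sph_ext. intros j. destruct j as [|[|j]].
  - fold y0 c0. rewrite Ey0, Ec0, Ekk; ring.
  - fold y1 c1. rewrite Ey1, Ec1, Ekk; ring.
  - rewrite !pt_zero by lia. reflexivity.
Qed.

Definition Qs n (a e : sphere n) (eta : R) : sphere n -> Prop :=
  fun y => 1 - eta < dot n (pt a) (pt y) /\ 0 < dot n (pt e) (pt y).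

Lemma overlap n (p e e' : sphere n) eta : 0 < eta -> dot n (pt p) (pt e) = 0 -> dot n (pt p) (pt e') = 0 ->
  -1 < dot n (pt e) (pt e') -> exists w, Qs n p e eta w /\ Qs n p e' eta w.
Proof.
  intros Heta H1 H2 H3.
  set (u := fun k => 1 * pt e k + 1 * pt e' k).
  assert (Hz : zv n u) by (apply zv_lin; apply pt_zv).
  assert (Hpu : dot n (pt p) u = 0) by (unfold u; rewrite dot_lin, H1, H2; ring).
  destruct (approx n p u Hz Hpu eta Heta) as [t [Ht [w [Hw Hpw]]]].
  assert (Hs : 0 < sqrt (1 + t * t * dot n u u)) by (apply sqrt_lt_R0; generalize (dot_nonneg n u); nra).
  exists w. unfold Qs. split; split; auto; rewrite Hw; apply Rdiv_lt_0_compat; auto.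
  - rewrite (dot_sym n (pt e) (pt p)), H1. unfold u. rewrite dot_lin, pt_unit. nra.
  - rewrite (dot_sym n (pt e') (pt p)), H2. unfold u. rewrite dot_lin, pt_unit, (dot_sym n (pt e') (pt e)). nra.
Qed.

Lemma accum_dir n (c e : sphere n) eta (O : sphere n -> Prop) : dot n (pt c) (pt e) = 0 -> 0 < eta ->
  is_open (sphere n) O -> O c -> exists y, y <> c /\ 1 - eta < dot n (pt c) (pt y) /\ 0 < dot n (pt e) (pt y) /\ O y.
Proof.
  intros Hce Heta HO Oc. destruct (sph_nbhd n O c HO Oc) as [eta' [Heta' HO']].
  destruct (approx n c (pt e) (pt_zv n e) Hce (Rmin eta eta') (Rmin_glb_lt _ _ _ Heta Heta'))
    as [t [Ht [w [Hw Hcw]]]].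
  assert (Hs : 0 < sqrt (1 + t * t * dot n (pt e) (pt e))) by (apply sqrt_lt_R0; rewrite pt_unit; nra).
  assert (Hew : 0 < dot n (pt e) (pt w)).
  { rewrite Hw, (dot_sym n (pt e) (pt c)), Hce. apply Rdiv_lt_0_compat; [rewrite pt_unit; lra | exact Hs]. }
  exists w. split; [|split; [|split]]; auto.
  - intros ->. rewrite dot_sym, Hce in Hew. lra.
  - generalize (Rmin_l eta eta'); lra.
  - apply HO'. generalize (Rmin_r eta eta'); lra.
Qed.

Lemma Qs_conn n (a e : sphere n) eta : eta <= 1 -> conn (sphere n) (Qs n a e eta).
Proof. intros H; apply Q_conn; auto. Qed.

Lemma sph_Hloc n : (1 <= n)%nat -> Hloc_prop (sphere n) (Nat.eqb n 1).
Proof.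
  intros Hn c x Hcx U HU Uc.
  destruct (sph_nbhd n U c HU Uc) as [eta0 [Heta0 HU0]].
  assert (Hdcx : dot n (pt c) (pt x) < 1) by (apply dot_lt1; auto).
  set (eta := Rmin (Rmin eta0 ((1 - dot n (pt c) (pt x)) / 2)) (1/2)).
  assert (He1 : eta <= Rmin eta0 ((1 - dot n (pt c) (pt x)) / 2)) by apply Rmin_l.
  assert (He2 : eta <= 1/2) by apply Rmin_r.
  assert (He3 : eta <= eta0) by (generalize (Rmin_l eta0 ((1 - dot n (pt c) (pt x)) / 2)); lra).
  assert (He4 : eta <= (1 - dot n (pt c) (pt x)) / 2) by (generalize (Rmin_r eta0 ((1 - dot n (pt c) (pt x)) / 2)); lra).
  assert (He0 : 0 < eta) by (unfold eta; repeat apply Rmin_glb_lt; lra).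
  destruct (perp1 n c Hn) as [e He].
  destruct (sph_neg n e) as [e' He'].
  assert (Hce' : dot n (pt c) (pt e') = 0) by (rewrite dot_sym, He', dot_sym, He; ring).
  exists (fun y => 1 - eta < dot n (pt c) (pt y)), (fun y => 1 - eta <= dot n (pt c) (pt y)).
  split; [apply dot_open_gt|].
  split; [rewrite pt_unit; lra|].
  split; [intros y Hy; apply HU0; lra|].
  split.
  { eapply cpt_ext; [apply (cpt_closed_sub _ _ (fun y => 1 - eta <= dot n (pt c) (pt y)) (sph_cpt n))|].
    - unfold closed. eapply open_ext; [apply (dot_open_lt n (pt c) (1 - eta))|]. intro y; lra.
    - intro y; tauto. }
  split; [intros y Hy; lra|].
  split; [intros y Hy ->; lra|].
  split.
  { intros O HO Oc. destruct (accum_dir n c e eta O He He0 HO Oc) as [y [? [? [? ?]]]]. eauto. }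
  destruct (Nat.eqb n 1) eqn:E; [|exact I].
  apply Nat.eqb_eq in E. subst n.
  exists (Qs 1 c e eta), (Qs 1 c e' eta).
  split; [apply open_inter; apply dot_open_gt|].
  split; [apply open_inter; apply dot_open_gt|].
  split; [apply Qs_conn; lra|].
  split; [apply Qs_conn; lra|].
  split; [intros y [H1 H2]; split; auto; intros ->; rewrite dot_sym, He in H2; lra|].
  split; [intros y [H1 H2]; split; auto; intros ->; rewrite dot_sym, Hce' in H2; lra|].
  split.
  { intros y Hy Hyc. destruct (Rtotal_order 0 (dot 1 (pt e) (pt y))) as [Hp|[Hz|Hm]].
    - left; split; auto.
    - exfalso. apply Hyc. apply (s1_eq c e y); auto. lra.
    - right; split; auto. rewrite He'. lra. }
  split; [intros y [_ H1] [_ H2]; rewrite He' in H2; lra|].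
  split.
  - intros O HO Oc. destruct (accum_dir 1 c e eta O He He0 HO Oc) as [y [? [? [? ?]]]].
    exists y; split; auto. split; auto. split; auto.
  - intros O HO Oc. destruct (accum_dir 1 c e' eta O Hce' He0 HO Oc) as [y [? [? [? ?]]]].
    exists y; split; auto. split; auto. split; auto.
Qed.

Lemma Qs_sub n (p e : sphere n) eta y : dot n (pt p) (pt e) = 0 -> Qs n p e eta y ->
  1 - eta < dot n (pt p) (pt y) /\ y <> p.
Proof. intros He [H1 H2]. split; auto. intros ->. rewrite dot_sym, He in H2. lra. Qed.

Lemma sph_Hp n (p : sphere n) : (1 <= n)%nat -> Hp_prop (sphere n) (Nat.eqb n 1) p.
Proof.
  intros Hn V0 HV0 V0p.
  destruct (sph_nbhd n V0 p HV0 V0p) as [eta0 [Heta0 HV]].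
  set (eta := Rmin eta0 (1/2)).
  assert (He1 : eta <= eta0) by apply Rmin_l.
  assert (He2 : eta <= 1/2) by apply Rmin_r.
  assert (He0 : 0 < eta) by (unfold eta; apply Rmin_glb_lt; lra).
  exists (fun y => 1 - eta < dot n (pt p) (pt y)).
  split; [apply dot_open_gt|]. split; [rewrite pt_unit; lra|].
  split; [intros y Hy; apply HV; lra|].
  destruct (Nat.eqb n 1) eqn:E.
  - apply Nat.eqb_eq in E. subst n.
    destruct (perp1 1 p Hn) as [e He]. destruct (sph_neg 1 e) as [e' He'].
    assert (Hpe' : dot 1 (pt p) (pt e') = 0) by (rewrite dot_sym, He', dot_sym, He; ring).
    exists (Qs 1 p e eta), (Qs 1 p e' eta).
    split; [apply Qs_conn; lra|]. split; [apply Qs_conn; lra|].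
    split; [intros y Hy; apply (Qs_sub 1 p e); auto|].
    split; [intros y Hy; apply (Qs_sub 1 p e'); auto|].
    intros y Hy Hyp. destruct (Rtotal_order 0 (dot 1 (pt e) (pt y))) as [Hq|[Hz|Hm]].
    + left; split; auto.
    + exfalso. apply Hyp. apply (s1_eq p e y); auto. lra.
    + right; split; auto. rewrite He'. lra.
  - assert (Hn2 : (2 <= n)%nat) by (apply Nat.eqb_neq in E; lia).
    apply conn_chain. intros y1 y2 [Hy1 Hy1p] [Hy2 Hy2p].
    destruct (tangent n p y1 Hy1p ltac:(lra)) as [e1 [Hpe1 He1y]].
    destruct (tangent n p y2 Hy2p ltac:(lra)) as [e2 [Hpe2 He2y]].
    destruct (Rlt_dec (-1) (dot n (pt e1) (pt e2))) as [Hlt|Hge].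
    + destruct (overlap n p e1 e2 eta He0 Hpe1 Hpe2 Hlt) as [w [Hw1 Hw2]].
      exists (fun y => Qs n p e1 eta y \/ Qs n p e2 eta y). split; [|split; [|split]].
      * apply conn_union2; [apply Qs_conn; lra|apply Qs_conn; lra|eauto].
      * intros y [Hy|Hy]; [apply (Qs_sub n p e1) | apply (Qs_sub n p e2)]; auto.
      * left; split; auto.
      * right; split; auto.
    + destruct (sph_neg n e1) as [e1' He1'].
      assert (Hle : dot n (pt e1') (pt e2) <= 1) by apply dot_le1.
      rewrite He1' in Hle.
      assert (E12 : e1' = e2) by (apply sph_eq_dot; rewrite He1'; lra).
      subst e2.
      destruct (perp2 n p e1 Hn2 Hpe1) as [e3 [Hpe3 He13]].
      assert (He31 : dot n (pt e3) (pt e1') = 0) by (rewrite dot_sym, He1'; lra).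
      destruct (overlap n p e1 e3 eta He0 Hpe1 Hpe3 ltac:(lra)) as [w1 [Hw1 Hw3]].
      destruct (overlap n p e3 e1' eta He0 Hpe3 Hpe2 ltac:(lra)) as [w2 [Hw3' Hw2]].
      exists (fun y => (Qs n p e1 eta y \/ Qs n p e3 eta y) \/ Qs n p e1' eta y). split; [|split; [|split]].
      * apply conn_union2; [apply conn_union2| |]; try (apply Qs_conn; lra); eauto.
      * intros y [[Hy|Hy]|Hy]; [apply (Qs_sub n p e1) | apply (Qs_sub n p e3) | apply (Qs_sub n p e1')]; auto.
      * left; left; split; auto.
      * right; split; auto.
Qed.

Theorem sphere_recon n : (1 <= n)%nat -> reconstructible (sphere n).
Proof.
  intros Hn.
  destruct (perp1 n (mk_sph n (bv 0) (zv_bv n 0 (Nat.le_0_l n)) ltac:(rewrite dot_bv by lia; reflexivity)) Hn)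
    as [p _].
  apply (abstract_recon (sphere n) (Nat.eqb n 1) p (sph_cpt n) (sph_haus n) (sph_three n Hn)
           (sph_Hp n p Hn) (sph_Hloc n Hn)).
Qed.


Theorem theorem2p3 :
  reconstructible unit_interval /\
  (forall n : nat, (1 <= n)%nat -> reconstructible (sphere n)).
Proof.
  split; [exact I_recon | exact sphere_recon].
Qed.
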